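(* If $\Gamma$ is a countable discrete group containing a central element of infinite order, then $\mathbb{C}\Gamma$ is not $C^*_r$-unique.
   Context: $\mathbb{C}\Gamma$ is the complex group algebra. $\mathbb{C}\Gamma$ is called $C^*_r$-unique if no $C^*$-norm on $\mathbb{C}\Gamma$ is properly majorised by the reduced $C^*$-norm (the norm from the left regular representation $\lambda:\mathbb{C}\Gamma\to\mathbb{B}(\ell^2\Gamma)$), i.e. there is no $C^*$-norm $\|\cdot\|$ on $\mathbb{C}\Gamma$ with $\|a\|\le\|\lambda(a)\|$ for all $a$ and strict inequality for some $a$. *)

(* Defs.v *)
From Stdlib Require Import Reals List ClassicalEpsilon.
Open Scope R_scope.

Definition C : Type := (R * R)%type.
Definition C0 : C := (0, 0).
Definition Cadd (z w : C) : C := (fst z + fst w, snd z + snd w).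
Definition Cmul (z w : C) : C :=
  (fst z * fst w - snd z * snd w, fst z * snd w + snd z * fst w).
Definition Cconj (z : C) : C := (fst z, - snd z).
Definition Cabs (z : C) : R := sqrt (fst z ^ 2 + snd z ^ 2).

(** Least upper bound of a set of reals (chosen classically; meaningful when
    the set is nonempty and bounded above). *)
Definition sup (E : R -> Prop) : R := epsilon (inhabits 0) (fun r => is_lub E r).

Record is_group {G : Type} (mul : G -> G -> G) (inv : G -> G) (e : G) : Prop := {
  grp_assoc : forall x y z, mul x (mul y z) = mul (mul x y) z;
  grp_id_l : forall x, mul e x = x;
  grp_inv_l : forall x, mul (inv x) x = e
}.

Definition countable (G : Type) : Prop :=
  exists f : G -> nat, forall x y, f x = f y -> x = y.

Fixpoint gpow {G : Type} (mul : G -> G -> G) (e : G) (z : G) (n : nat) : G :=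
  match n with O => e | S n => mul z (gpow mul e z n) end.

Section GroupAlgebra.
Variables (G : Type) (mul : G -> G -> G) (inv : G -> G).

(** Elements of the complex group algebra CG: finitely supported functions G -> C. *)
Definition finsupp (a : G -> C) : Prop :=
  exists l : list G, forall g, a g <> C0 -> In g l.

Definition fsum (f : G -> C) : C :=
  let l := epsilon (inhabits nil)
             (fun l => NoDup l /\ forall g, f g <> C0 -> In g l) in
  fold_right (fun g acc => Cadd (f g) acc) C0 l.

Definition gadd (a b : G -> C) : G -> C := fun g => Cadd (a g) (b g).
Definition gscale (z : C) (a : G -> C) : G -> C := fun g => Cmul z (a g).
Definition gconv (a b : G -> C) : G -> C :=
  fun g => fsum (fun h => Cmul (a h) (b (mul (inv h) g))).
Definition gstar (a : G -> C) : G -> C := fun g => Cconj (a (inv g)).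

Definition sumsq_set (xi : G -> C) (r : R) : Prop :=
  exists l : list G, NoDup l /\
    r = fold_right (fun g acc => Cabs (xi g) ^ 2 + acc) 0 l.
Definition in_l2 (xi : G -> C) : Prop := bound (sumsq_set xi).
Definition l2norm (xi : G -> C) : R := sqrt (sup (sumsq_set xi)).

Definition lambda (a : G -> C) (xi : G -> C) : G -> C :=
  fun g => fsum (fun h => Cmul (a h) (xi (mul (inv h) g))).

Definition reduced_norm (a : G -> C) : R :=
  sup (fun r => exists xi, in_l2 xi /\ l2norm xi <= 1 /\ r = l2norm (lambda a xi)).

Record is_Cstar_norm (N : (G -> C) -> R) : Prop := {
  cn_nonneg : forall a, finsupp a -> 0 <= N a;
  cn_definite : forall a, finsupp a -> N a = 0 -> forall g, a g = C0;
  cn_triangle : forall a b, finsupp a -> finsupp b -> N (gadd a b) <= N a + N b;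
  cn_homog : forall z a, finsupp a -> N (gscale z a) = Cabs z * N a;
  cn_submult : forall a b, finsupp a -> finsupp b -> N (gconv a b) <= N a * N b;
  cn_cstar : forall a, finsupp a -> N (gconv (gstar a) a) = N a ^ 2
}.

Definition Cr_unique : Prop :=
  ~ exists N : (G -> C) -> R,
      is_Cstar_norm N /\
      (forall a, finsupp a -> N a <= reduced_norm a) /\
      (exists a, finsupp a /\ N a < reduced_norm a).

End GroupAlgebra.

(* Main.v *)
Require Import Defs.
From Stdlib Require Import Reals List ClassicalEpsilon Permutation Lra Lia FunctionalExtensionality Ring Field.
From Coquelicot Require Import Complex.
Open Scope R_scope.

Module P1.
Open Scope R_scope.

Lemma Gdec_gen (T : Type) : forall x y : T, {x = y} + {x <> y}.
Proof. intros; apply excluded_middle_informative. Qed.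

Section Basics.
Variables (G : Type).

Definition lsum (l : list G) (f : G -> C) : C :=
  fold_right (fun g acc => Cplus (f g) acc) (RtoC 0) l.
Definition sumR (l : list G) (f : G -> R) : R :=
  fold_right (fun g acc => f g + acc) 0 l.
Definition covers (l : list G) (f : G -> C) : Prop := forall g, f g <> RtoC 0 -> In g l.

Arguments lsum : simpl never.
Arguments sumR : simpl never.
Lemma sumR_nil f : sumR nil f = 0. Proof. reflexivity. Qed.
Lemma lsum_nil f : lsum nil f = RtoC 0. Proof. reflexivity. Qed.
Lemma lsum_cons x l f : lsum (x :: l) f = Cplus (f x) (lsum l f). Proof. reflexivity. Qed.
Lemma sumR_cons x l f : sumR (x :: l) f = f x + sumR l f. Proof. reflexivity. Qed.

Lemma lsum_perm l1 l2 f : Permutation l1 l2 -> lsum l1 f = lsum l2 f.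
Proof.
  induction 1; auto.
  - rewrite !lsum_cons, IHPermutation; auto.
  - rewrite !lsum_cons. ring.
  - congruence.
Qed.

Lemma sumR_perm l1 l2 f : Permutation l1 l2 -> sumR l1 f = sumR l2 f.
Proof.
  induction 1; auto.
  - rewrite !sumR_cons, IHPermutation; auto.
  - rewrite !sumR_cons. ring.
  - congruence.
Qed.

Definition nzb (f : G -> C) (g : G) : bool :=
  if excluded_middle_informative (f g = RtoC 0) then false else true.

Lemma lsum_filter l f : lsum l f = lsum (filter (nzb f) l) f.
Proof.
  induction l; simpl; auto. unfold nzb at 1.
  destruct (excluded_middle_informative (f a = RtoC 0)).
  - rewrite lsum_cons, e, IHl. ring.
  - rewrite !lsum_cons, IHl. auto.
Qed.

Lemma lsum_cover_eq l1 l2 f : NoDup l1 -> NoDup l2 -> covers l1 f -> covers l2 f ->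
  lsum l1 f = lsum l2 f.
Proof.
  intros N1 N2 C1 C2. rewrite (lsum_filter l1), (lsum_filter l2).
  apply lsum_perm. apply NoDup_Permutation; try apply NoDup_filter; auto.
  intro x. rewrite !filter_In. unfold nzb.
  destruct (excluded_middle_informative (f x = RtoC 0)); split; intros [H1 H2]; try discriminate;
  split; auto.
Qed.

Lemma sumR_app l1 l2 f : sumR (l1 ++ l2) f = sumR l1 f + sumR l2 f.
Proof. induction l1; simpl; [rewrite sumR_nil; ring|]. rewrite ?sumR_cons, ?sumR_nil in *. rewrite IHl1. ring. Qed.
Lemma lsum_app l1 l2 f : lsum (l1 ++ l2) f = Cplus (lsum l1 f) (lsum l2 f).
Proof. induction l1; simpl. rewrite ?lsum_nil; ring. rewrite !lsum_cons, IHl1. ring. Qed.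

Lemma sumR_ge0 l f : (forall g, 0 <= f g) -> 0 <= sumR l f.
Proof. intros H; induction l; simpl; [rewrite ?sumR_nil; lra|]. specialize (H a). rewrite sumR_cons; lra. Qed.

Lemma sumR_le l f h : (forall g, In g l -> f g <= h g) -> sumR l f <= sumR l h.
Proof. induction l; simpl; intros H; [rewrite ?sumR_nil; lra|]. rewrite ?sumR_cons, ?sumR_nil in *.
  assert (forall g, In g l -> f g <= h g) by auto.
  specialize (H a (or_introl eq_refl)). specialize (IHl H0). lra. Qed.

Lemma sumR_ext l f h : (forall g, In g l -> f g = h g) -> sumR l f = sumR l h.
Proof. induction l; simpl; intros H; auto. rewrite ?sumR_cons, ?sumR_nil in *.
  rewrite H by auto. rewrite IHl; auto. Qed.

Lemma lsum_ext l f h : (forall g, In g l -> f g = h g) -> lsum l f = lsum l h.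
Proof. induction l; simpl; intros H; auto. rewrite !lsum_cons.
  rewrite H by auto. rewrite IHl; auto. Qed.

Lemma sumR_plus l f h : sumR l (fun g => f g + h g) = sumR l f + sumR l h.
Proof. induction l; simpl; [rewrite ?sumR_nil; ring|]. rewrite ?sumR_cons, ?sumR_nil in *. rewrite IHl; ring. Qed.
Lemma sumR_scal l c f : sumR l (fun g => c * f g) = c * sumR l f.
Proof. induction l; simpl; [rewrite ?sumR_nil; ring|]. rewrite ?sumR_cons, ?sumR_nil in *. rewrite IHl; ring. Qed.
Lemma lsum_plus l f h : lsum l (fun g => Cplus (f g) (h g)) = Cplus (lsum l f) (lsum l h).
Proof. induction l; simpl; [rewrite ?lsum_nil; ring|]. rewrite !lsum_cons, IHl; ring. Qed.
Lemma lsum_scal l c f : lsum l (fun g => Cmult c (f g)) = Cmult c (lsum l f).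
Proof. induction l; simpl; [rewrite ?lsum_nil; ring|]. rewrite !lsum_cons, IHl; ring. Qed.
Lemma lsum_scalr l c f : lsum l (fun g => Cmult (f g) c) = Cmult (lsum l f) c.
Proof. induction l; simpl; [rewrite ?lsum_nil; ring|]. rewrite !lsum_cons, IHl; ring. Qed.
Lemma lsum_zero l : lsum l (fun _ => RtoC 0) = RtoC 0.
Proof. induction l; simpl; auto. rewrite lsum_cons, IHl. ring. Qed.
Lemma lsum_conj l f : Cconj (lsum l f) = lsum l (fun g => Cconj (f g)).
Proof. induction l; simpl. rewrite ?lsum_nil. apply injective_projections; simpl; ring.
  rewrite !lsum_cons, Cplus_conj, IHl. auto. Qed.

Lemma lsum_swap (l1 l2 : list G) (F : G -> G -> C) :
  lsum l1 (fun x => lsum l2 (F x)) = lsum l2 (fun y => lsum l1 (fun x => F x y)).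
Proof.
  induction l1; simpl.
  - rewrite lsum_nil. symmetry. apply lsum_zero.
  - rewrite lsum_cons, IHl1. rewrite <- lsum_plus. apply lsum_ext. intros; rewrite lsum_cons; auto.
Qed.

Lemma lsum_mod l f : Cmod (lsum l f) <= sumR l (fun g => Cmod (f g)).
Proof. induction l; simpl. rewrite ?lsum_nil. rewrite Cmod_0. rewrite ?sumR_nil; lra.
  rewrite lsum_cons. rewrite ?sumR_cons, ?sumR_nil in *. eapply Rle_trans. apply Cmod_triangle. lra. Qed.

Lemma lsum_nz l f : lsum l f <> RtoC 0 -> exists g, In g l /\ f g <> RtoC 0.
Proof. intros H. induction l. destruct H; auto.
  destruct (excluded_middle_informative (f a = RtoC 0)).
  - destruct IHl as [g [? ?]]. rewrite lsum_cons, e in H. intro E. apply H. rewrite E. ring.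
    exists g; simpl; auto.
  - exists a; simpl; auto. Qed.

Lemma sumR_incl (l1 l2 : list G) f : (forall g, 0 <= f g) -> NoDup l1 -> NoDup l2 ->
  incl l1 l2 -> sumR l1 f <= sumR l2 f.
Proof.
  revert l2. induction l1 as [|x l1 IH]; intros l2 Hf N1 N2 I.
  - simpl. apply sumR_ge0; auto.
  - assert (Hx : In x l2) by (apply I; simpl; auto).
    destruct (in_split _ _ Hx) as [u [v Huv]]. subst l2.
    rewrite (sumR_perm (u ++ x :: v) (x :: u ++ v)) by (symmetry; apply Permutation_middle).
    rewrite !sumR_cons. inversion N1; subst.
    apply Rplus_le_compat_l. apply IH; auto.
    + apply NoDup_remove_1 in N2; auto.
    + intros y Hy. specialize (I y (or_intror Hy)). apply in_app_or in I. apply in_or_app.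
      destruct I as [I|[I|I]]; auto. subst; contradiction.
Qed.

Lemma sumR_filter (l : list G) f P : (forall g, P g = false -> f g = 0) -> sumR l f = sumR (filter P l) f.
Proof. intros H; induction l; simpl; auto. rewrite ?sumR_cons, ?sumR_nil in *. destruct (P a) eqn:E; simpl.
  rewrite IHl; auto. rewrite H, IHl; auto; ring. Qed.

End Basics.

End P1.
Import P1.

Module P2.
Open Scope R_scope.

Section Grp.
Variables (G : Type) (mul : G -> G -> G) (inv : G -> G) (e : G).
Hypothesis Hgrp : is_group mul inv e.

Lemma m_assoc x y z : mul x (mul y z) = mul (mul x y) z. Proof. apply (grp_assoc _ _ _ Hgrp). Qed.
Lemma m_1l x : mul e x = x. Proof. apply (grp_id_l _ _ _ Hgrp). Qed.
Lemma m_Vl x : mul (inv x) x = e. Proof. apply (grp_inv_l _ _ _ Hgrp). Qed.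
Lemma m_Vr x : mul x (inv x) = e.
Proof.
  rewrite <- (m_1l (mul x (inv x))). rewrite <- (m_Vl (inv x)) at 1.
  rewrite <- m_assoc, (m_assoc (inv x) x (inv x)), m_Vl, m_1l. apply m_Vl.
Qed.
Lemma m_1r x : mul x e = x.
Proof. rewrite <- (m_Vl x), m_assoc, m_Vr, m_1l; auto. Qed.
Lemma m_cancel_l a x y : mul a x = mul a y -> x = y.
Proof. intros H. rewrite <- (m_1l x), <- (m_1l y), <- (m_Vl a), <- !m_assoc, H; auto. Qed.
Lemma m_KV a x : mul (inv a) (mul a x) = x. Proof. rewrite m_assoc, m_Vl, m_1l; auto. Qed.
Lemma m_VK a x : mul a (mul (inv a) x) = x. Proof. rewrite m_assoc, m_Vr, m_1l; auto. Qed.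
Lemma inv_inv x : inv (inv x) = x.
Proof. apply (m_cancel_l (inv x)). rewrite m_Vr, m_Vl; auto. Qed.
Lemma inv_mul x y : inv (mul x y) = mul (inv y) (inv x).
Proof. apply (m_cancel_l (mul x y)). rewrite m_Vr, <- m_assoc, (m_assoc y), m_Vr, m_1l, m_Vr; auto. Qed.
Lemma inv_e : inv e = e. Proof. rewrite <- (m_1l (inv e)). apply m_Vr. Qed.

Definition fs (f : G -> C) : C := fsum G f.

Lemma fsum_spec l f : NoDup l -> covers G l f -> fs f = lsum G l f.
Proof.
  intros N Cv. unfold fs, fsum.
  set (P := fun l0 : list G => NoDup l0 /\ (forall g, f g <> C0 -> In g l0)).
  assert (HP : exists l0, P l0) by (exists l; split; auto).
  destruct (epsilon_spec (inhabits nil) P HP) as [N' C'].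
  change (lsum G (epsilon (inhabits nil) P) f = lsum G l f).
  apply lsum_cover_eq; auto.
Qed.

Lemma nodup_cover l f : covers G l f -> NoDup (nodup (Gdec_gen G) l) /\ covers G (nodup (Gdec_gen G) l) f.
Proof. intros H; split. apply NoDup_nodup. intros g Hg; apply nodup_In; auto. Qed.

Lemma fsum_spec' l f : covers G l f -> fs f = lsum G (nodup (Gdec_gen G) l) f.
Proof. intros H; destruct (nodup_cover l f H); apply fsum_spec; auto. Qed.

Lemma fin_ex f : finsupp G f -> exists l, NoDup l /\ covers G l f.
Proof. intros [l H]. exists (nodup (Gdec_gen G) l). apply nodup_cover; exact H. Qed.

Lemma covers_app_l l1 l2 f : covers G l1 f -> covers G (l1 ++ l2) f.
Proof. intros H g Hg; apply in_or_app; auto. Qed.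
Lemma covers_app_r l1 l2 f : covers G l2 f -> covers G (l1 ++ l2) f.
Proof. intros H g Hg; apply in_or_app; auto. Qed.

Lemma Cplus_nz a b : Cplus a b <> RtoC 0 -> a <> RtoC 0 \/ b <> RtoC 0.
Proof. intros H. destruct (excluded_middle_informative (a = RtoC 0)); auto.
  right. intro E. apply H. rewrite e0, E. ring. Qed.
Lemma Cmult_nz a b : Cmult a b <> RtoC 0 -> a <> RtoC 0 /\ b <> RtoC 0.
Proof. intros H; split; intro E; apply H; rewrite E; ring. Qed.

Lemma fsum_plus f h : finsupp G f -> finsupp G h ->
  fs (fun g => Cplus (f g) (h g)) = Cplus (fs f) (fs h).
Proof.
  intros [l1 H1] [l2 H2].
  assert (Cf : covers G (l1 ++ l2) f) by (apply covers_app_l; exact H1).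
  assert (Ch : covers G (l1 ++ l2) h) by (apply covers_app_r; exact H2).
  assert (Cfh : covers G (l1 ++ l2) (fun g => Cplus (f g) (h g))).
  { intros g Hg. destruct (Cplus_nz _ _ Hg); auto. }
  rewrite (fsum_spec' _ _ Cf), (fsum_spec' _ _ Ch), (fsum_spec' _ _ Cfh).
  apply lsum_plus.
Qed.

Lemma fsum_scal c f : finsupp G f -> fs (fun g => Cmult c (f g)) = Cmult c (fs f).
Proof.
  intros [l H]. assert (H' : covers G l (fun g => Cmult c (f g))).
  { intros g Hg; apply Cmult_nz in Hg; apply H; tauto. }
  rewrite (fsum_spec' _ _ H), (fsum_spec' _ _ H'). apply lsum_scal.
Qed.

Lemma fsum_zero : fs (fun _ => RtoC 0) = RtoC 0.
Proof. rewrite (fsum_spec nil). apply lsum_nil. constructor. intros g H; now destruct H. Qed.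

Lemma fsum_conj f : finsupp G f -> Cconj (fs f) = fs (fun g => Cconj (f g)).
Proof.
  intros [l H]. assert (H' : covers G l (fun g => Cconj (f g))).
  { intros g Hg; apply H; intro E; apply Hg; rewrite E. apply injective_projections; simpl; ring. }
  rewrite (fsum_spec' _ _ H), (fsum_spec' _ _ H'). apply lsum_conj.
Qed.

Lemma fsum_single f x : (forall g, g <> x -> f g = RtoC 0) -> fs f = f x.
Proof.
  intros H. rewrite (fsum_spec (x :: nil)). rewrite lsum_cons, lsum_nil. ring.
  repeat constructor; auto. intros g Hg. destruct (Gdec_gen G g x). subst; simpl; auto.
  exfalso; apply Hg, H; auto.
Qed.


Lemma NoDup_map_inj (phi : G -> G) l : (forall x y, phi x = phi y -> x = y) -> NoDup l -> NoDup (map phi l).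
Proof. intros Hi N. induction N; simpl; constructor; auto.
  intro Hin. apply in_map_iff in Hin. destruct Hin as [y [Hy Hy']]. apply Hi in Hy. subst; auto. Qed.

Lemma lsum_map (phi : G -> G) l f : lsum G (map phi l) f = lsum G l (fun x => f (phi x)).
Proof. induction l; [reflexivity|]. cbn [map]. rewrite !lsum_cons, IHl; auto. Qed.
Lemma sumR_map (phi : G -> G) l f : sumR G (map phi l) f = sumR G l (fun x => f (phi x)).
Proof. induction l; [reflexivity|]. cbn [map]. rewrite !sumR_cons, IHl; auto. Qed.

Lemma fsum_bij (phi psi : G -> G) f : (forall x, psi (phi x) = x) -> (forall y, phi (psi y) = y) ->
  finsupp G f -> fs (fun x => f (phi x)) = fs f.
Proof.
  intros K1 K2 Hf. destruct (fin_ex f Hf) as [l [N H]].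
  rewrite (fsum_spec l f) by auto.
  rewrite (fsum_spec (map psi l)).
  - rewrite lsum_map. apply lsum_ext. intros; rewrite K2; auto.
  - apply NoDup_map_inj; auto. intros x y E. rewrite <- (K2 x), <- (K2 y), E; auto.
  - intros x Hx. apply H in Hx. rewrite <- (K1 x). apply in_map; auto.
Qed.

Lemma fsum_lmul f h : finsupp G f -> fs (fun x => f (mul h x)) = fs f.
Proof. apply fsum_bij with (psi := fun y => mul (inv h) y); intros; [apply m_KV | apply m_VK]. Qed.
Lemma fsum_inv f : finsupp G f -> fs (fun x => f (inv x)) = fs f.
Proof. apply fsum_bij with (psi := inv); intros; apply inv_inv. Qed.
Lemma fsum_rmul f h : finsupp G f -> fs (fun x => f (mul x h)) = fs f.
Proof. apply fsum_bij with (psi := fun y => mul y (inv h)); intros.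
  rewrite <- m_assoc, m_Vr, m_1r; auto. rewrite <- m_assoc, m_Vl, m_1r; auto. Qed.

Lemma fsum_swap (F : G -> G -> C) l1 l2 :
  (forall x y, F x y <> RtoC 0 -> In x l1 /\ In y l2) ->
  fs (fun x => fs (fun y => F x y)) = fs (fun y => fs (fun x => F x y)).
Proof.
  intros H.
  set (n1 := nodup (Gdec_gen G) l1). set (n2 := nodup (Gdec_gen G) l2).
  assert (N1 : NoDup n1) by apply NoDup_nodup. assert (N2 : NoDup n2) by apply NoDup_nodup.
  assert (I1 : forall x y, F x y <> RtoC 0 -> In x n1) by (intros x y Hx; apply nodup_In, (H x y Hx)).
  assert (I2 : forall x y, F x y <> RtoC 0 -> In y n2) by (intros x y Hx; apply nodup_In, (H x y Hx)).
  assert (E1 : forall x, fs (fun y => F x y) = lsum G n2 (F x)).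
  { intros x; apply fsum_spec; auto. intros y Hy; apply (I2 x y Hy). }
  assert (E2 : forall y, fs (fun x => F x y) = lsum G n1 (fun x => F x y)).
  { intros y; apply fsum_spec; auto. intros x Hx; apply (I1 x y Hx). }
  rewrite (functional_extensionality _ _ E1), (functional_extensionality _ _ E2).
  rewrite (fsum_spec n1), (fsum_spec n2); auto.
  - apply lsum_swap.
  - intros y Hy. apply lsum_nz in Hy. destruct Hy as [x [_ Hx]]. apply (I2 x y Hx).
  - intros x Hx. apply lsum_nz in Hx. destruct Hx as [y [_ Hy]]. apply (I1 x y Hy).
Qed.

End Grp.

End P2.
Import P2.

Module P3.
Open Scope R_scope.

Lemma sup_spec E r : is_lub E r -> sup E = r.
Proof.
  intros H. unfold sup.
  assert (HP : exists r0, is_lub E r0) by (exists r; auto).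
  destruct (epsilon_spec (inhabits 0) (fun r0 => is_lub E r0) HP) as [U L].
  destruct H as [U' L']. apply Rle_antisym; auto.
Qed.

Lemma sup_lub E : bound E -> (exists x, E x) -> is_lub E (sup E).
Proof.
  intros B Ex. destruct (completeness E B Ex) as [m Hm]. rewrite (sup_spec E m Hm). auto.
Qed.

Lemma sup_ub E x : bound E -> E x -> x <= sup E.
Proof. intros B Ex. apply (sup_lub E B (ex_intro _ x Ex)); auto. Qed.

Lemma sup_least E c : (exists x, E x) -> (forall x, E x -> x <= c) -> sup E <= c.
Proof. intros Ex H. apply (sup_lub E (ex_intro _ c H) Ex). exact H. Qed.

Lemma sup_approx E d : bound E -> (exists x, E x) -> 0 < d -> exists x, E x /\ sup E - d < x.
Proof.
  intros B Ex Hd. destruct (excluded_middle_informative (exists x, E x /\ sup E - d < x)) as [H|H]; auto.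
  exfalso. assert (sup E <= sup E - d).
  { apply sup_least; auto. intros x Hx. destruct (Rle_dec x (sup E - d)); auto.
    exfalso; apply H; exists x; split; auto; lra. }
  lra.
Qed.

Lemma CS_real (G : Type) (l : list G) (x y : G -> R) :
  sumR G l (fun g => x g * y g) <= sqrt (sumR G l (fun g => x g ^ 2)) * sqrt (sumR G l (fun g => y g ^ 2)).
Proof.
  induction l as [|g0 l IHl].
  - rewrite !sumR_nil, sqrt_0. lra.
  - rewrite !sumR_cons.
    assert (HA : 0 <= sumR G l (fun g => x g ^ 2)) by (apply sumR_ge0; intros; apply pow2_ge_0).
    assert (HB : 0 <= sumR G l (fun g => y g ^ 2)) by (apply sumR_ge0; intros; apply pow2_ge_0).
    set (A := sumR G l (fun g => x g ^ 2)) in *. set (B := sumR G l (fun g => y g ^ 2)) in *.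
    set (S := sumR G l (fun g => x g * y g)) in *.
    pose proof (sqrt_sqrt A HA) as Ea. pose proof (sqrt_sqrt B HB) as Eb.
    pose proof (sqrt_pos A) as Ha. pose proof (sqrt_pos B) as Hb.
    set (a := sqrt A) in *. set (b := sqrt B) in *.
    set (u := x g0) in *. set (v := y g0) in *.
    rewrite <- sqrt_mult by nra.
    apply Rle_trans with (Rabs (u * v) + a * b).
    + pose proof (Rle_abs (u * v)). lra.
    + apply Rsqr_incr_0_var. 2: apply sqrt_pos.
      rewrite Rsqr_sqrt by nra. unfold Rsqr. rewrite Rabs_mult.
      assert (E1 : Rabs u * Rabs u = u ^ 2) by (rewrite <- Rabs_mult; rewrite Rabs_right; [ring| nra]).
      assert (E2 : Rabs v * Rabs v = v ^ 2) by (rewrite <- Rabs_mult; rewrite Rabs_right; [ring| nra]).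
      pose proof (Rabs_pos u). pose proof (Rabs_pos v).
      rewrite <- Ea, <- Eb. rewrite <- E1, <- E2.
      set (p := Rabs u) in *. set (q := Rabs v) in *.
      assert (0 <= (p * b - q * a) ^ 2) by apply pow2_ge_0. nra.
Qed.

Lemma le_div_r a b k : 0 < k -> a * k <= b -> a <= b / k.
Proof. intros Hk H. apply Rmult_le_reg_r with k; auto. unfold Rdiv. rewrite Rmult_assoc, Rinv_l; lra. Qed.

Section Norms.
Variables (G : Type) (mul : G -> G -> G) (inv : G -> G) (e : G).
Hypothesis Hgrp : is_group mul inv e.

Definition sq (l : list G) (xi : G -> C) : R := sumR G l (fun g => Cmod (xi g) ^ 2).
Definition nsq (xi : G -> C) : R := sup (sumsq_set G xi).

Lemma sq_ge0 l xi : 0 <= sq l xi.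
Proof. apply sumR_ge0; intros; apply pow2_ge_0. Qed.

Lemma sumsq_iff xi r : sumsq_set G xi r <-> exists l, NoDup l /\ r = sq l xi.
Proof. reflexivity. Qed.

Lemma l2norm_eq xi : l2norm G xi = sqrt (nsq xi).
Proof. reflexivity. Qed.

Lemma sq_sub l l' xi : NoDup l -> NoDup l' -> covers G l xi -> sq l' xi <= sq l xi.
Proof.
  intros N N' Cv. unfold sq.
  rewrite (sumR_filter G l' _ (fun g => if excluded_middle_informative (In g l) then true else false)).
  - apply sumR_incl. intros; apply pow2_ge_0. apply NoDup_filter; auto. auto.
    intros g Hg. apply filter_In in Hg. destruct Hg as [_ Hg].
    destruct (excluded_middle_informative (In g l)); auto; discriminate.
  - intros g Hg. destruct (excluded_middle_informative (In g l)); try discriminate.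
    destruct (excluded_middle_informative (xi g = RtoC 0)) as [E|E].
    + rewrite E, Cmod_0. ring.
    + exfalso; apply n, Cv, E.
Qed.

Lemma nsq_fin l xi : NoDup l -> covers G l xi -> in_l2 G xi /\ nsq xi = sq l xi.
Proof.
  intros N Cv.
  assert (Hl : is_lub (sumsq_set G xi) (sq l xi)).
  { split.
    - intros r [l' [N' ->]]. apply sq_sub; auto.
    - intros b Hb. apply Hb. exists l; auto. }
  split. exists (sq l xi). apply Hl. apply sup_spec; auto.
Qed.

Lemma fin_l2 xi : finsupp G xi -> in_l2 G xi.
Proof. intros H. destruct (fin_ex G xi H) as [l [N Cv]]. apply (nsq_fin l); auto. Qed.

Lemma sq_le_nsq l xi : in_l2 G xi -> NoDup l -> sq l xi <= nsq xi.
Proof. intros B N. apply sup_ub; auto. exists l; auto. Qed.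

Lemma nsq_ge0 xi : in_l2 G xi -> 0 <= nsq xi.
Proof. intros B. apply Rle_trans with (sq nil xi). unfold sq; rewrite sumR_nil; lra.
  apply sq_le_nsq; auto. constructor. Qed.

Lemma nsq_bound xi c : (forall l, NoDup l -> sq l xi <= c) -> in_l2 G xi /\ nsq xi <= c.
Proof.
  intros H. assert (B : in_l2 G xi). { exists c. intros r [l [N ->]]. apply H; auto. }
  split; auto. apply sup_least. exists 0, nil. split. constructor. reflexivity.
  intros r [l [N ->]]. apply H; auto.
Qed.

Lemma sq_mink l xi eta :
  sqrt (sq l (fun g => Cplus (xi g) (eta g))) <= sqrt (sq l xi) + sqrt (sq l eta).
Proof.
  unfold sq.
  assert (H1 : sumR G l (fun g => Cmod (Cplus (xi g) (eta g)) ^ 2) <=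
      sumR G l (fun g => Cmod (xi g) ^ 2) + sumR G l (fun g => Cmod (eta g) ^ 2)
      + 2 * sumR G l (fun g => Cmod (xi g) * Cmod (eta g))).
  { rewrite <- sumR_scal, <- !sumR_plus. apply sumR_le. intros g _.
    pose proof (Cmod_triangle (xi g) (eta g)). pose proof (Cmod_ge_0 (Cplus (xi g) (eta g))).
    pose proof (Cmod_ge_0 (xi g)). pose proof (Cmod_ge_0 (eta g)). nra. }
  pose proof (CS_real G l (fun g => Cmod (xi g)) (fun g => Cmod (eta g))). cbv beta in H.
  set (A := sumR G l (fun g => Cmod (xi g) ^ 2)) in *.
  set (B := sumR G l (fun g => Cmod (eta g) ^ 2)) in *.
  assert (HA : 0 <= A) by (apply sumR_ge0; intros; apply pow2_ge_0).
  assert (HB : 0 <= B) by (apply sumR_ge0; intros; apply pow2_ge_0).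
  pose proof (sqrt_sqrt A HA). pose proof (sqrt_sqrt B HB).
  pose proof (sqrt_pos A). pose proof (sqrt_pos B).
  apply Rsqr_incr_0_var. 2: lra.
  rewrite Rsqr_sqrt by (apply sumR_ge0; intros; apply pow2_ge_0). unfold Rsqr.
  assert (E : (sqrt A + sqrt B) * (sqrt A + sqrt B) = A + B + 2 * (sqrt A * sqrt B)) by nra.
  rewrite E. lra.
Qed.

Lemma sq_scal l c xi : sq l (fun g => Cmult c (xi g)) = Cmod c ^ 2 * sq l xi.
Proof. unfold sq. rewrite <- sumR_scal. apply sumR_ext. intros. rewrite Cmod_mult. ring. Qed.

Lemma l2_add xi eta : in_l2 G xi -> in_l2 G eta ->
  in_l2 G (fun g => Cplus (xi g) (eta g)) /\
  l2norm G (fun g => Cplus (xi g) (eta g)) <= l2norm G xi + l2norm G eta.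
Proof.
  intros Bx By. rewrite !l2norm_eq.
  set (a := sqrt (nsq xi)). set (b := sqrt (nsq eta)).
  assert (Ha : 0 <= a) by apply sqrt_pos. assert (Hb : 0 <= b) by apply sqrt_pos.
  destruct (nsq_bound (fun g => Cplus (xi g) (eta g)) ((a + b) ^ 2)) as [B H].
  { intros l N. pose proof (sq_mink l xi eta).
    assert (sqrt (sq l xi) <= a) by (apply sqrt_le_1_alt, sq_le_nsq; auto).
    assert (sqrt (sq l eta) <= b) by (apply sqrt_le_1_alt, sq_le_nsq; auto).
    rewrite <- (sqrt_sqrt (sq l _)) by apply sq_ge0.
    pose proof (sqrt_pos (sq l (fun g => Cplus (xi g) (eta g)))). nra. }
  split; auto. rewrite <- (sqrt_pow2 (a + b)) by lra. apply sqrt_le_1_alt; auto.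
Qed.

Lemma l2_scal c xi : in_l2 G xi -> in_l2 G (fun g => Cmult c (xi g)) /\
  nsq (fun g => Cmult c (xi g)) = Cmod c ^ 2 * nsq xi.
Proof.
  intros B.
  destruct (nsq_bound (fun g => Cmult c (xi g)) (Cmod c ^ 2 * nsq xi)) as [B' H].
  { intros l N. rewrite sq_scal. apply Rmult_le_compat_l. apply pow2_ge_0. apply sq_le_nsq; auto. }
  split; auto. apply Rle_antisym; auto.
  destruct (excluded_middle_informative (c = RtoC 0)) as [E|E].
  - subst c. rewrite Cmod_0. pose proof (nsq_ge0 _ B'). replace (0 ^ 2 * nsq xi) with 0 by ring. auto.
  - apply Cmod_gt_0 in E. assert (0 < Cmod c ^ 2) by (apply pow_lt; auto).
    assert (nsq xi <= nsq (fun g => Cmult c (xi g)) / Cmod c ^ 2).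
    { apply sup_least. exists 0, nil; split; [constructor|reflexivity].
    intros r [l [N ->]]. apply le_div_r; auto. rewrite (Rmult_comm (sq l xi)), <- sq_scal.
    apply sq_le_nsq; auto. }
    apply Rmult_le_compat_l with (r := Cmod c ^ 2) in H1; [|lra].
    replace (Cmod c ^ 2 * (nsq (fun g => Cmult c (xi g)) / Cmod c ^ 2)) with (nsq (fun g => Cmult c (xi g))) in H1
      by (field; lra). exact H1.
Qed.

Lemma l2norm_scal c xi : in_l2 G xi -> l2norm G (fun g => Cmult c (xi g)) = Cmod c * l2norm G xi.
Proof.
  intros B. rewrite !l2norm_eq. destruct (l2_scal c xi B) as [_ ->].
  rewrite sqrt_mult by (try apply pow2_ge_0; apply nsq_ge0; auto).
  rewrite sqrt_pow2 by apply Cmod_ge_0. auto.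
Qed.

Lemma l2norm_ge0 xi : 0 <= l2norm G xi.
Proof. apply sqrt_pos. Qed.

End Norms.

End P3.
Import P3.

Module P4.
Open Scope R_scope.

Section Lam.
Variables (G : Type) (mul : G -> G -> G) (inv : G -> G) (e : G).
Hypothesis Hgrp : is_group mul inv e.

Notation fs := (fs G).
Notation lsum := (lsum G).
Notation sumR := (sumR G).
Notation covers := (covers G).
Notation finsupp := (finsupp G).
Notation sq := (sq G).
Notation nsq := (nsq G).
Notation l2 := (l2norm G).

Definition lam (a xi : G -> C) : G -> C := fun g => fs (fun h => Cmult (a h) (xi (mul (inv h) g))).
Definition conv (a b : G -> C) : G -> C := fun g => fs (fun h => Cmult (a h) (b (mul (inv h) g))).
Definition star (a : G -> C) : G -> C := fun g => Cconj (a (inv g)).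

Lemma lam_eq a xi : lambda G mul inv a xi = lam a xi. Proof. reflexivity. Qed.
Lemma conv_eq a b : gconv G mul inv a b = conv a b. Proof. reflexivity. Qed.
Lemma star_eq a : gstar G inv a = star a. Proof. reflexivity. Qed.

Definition Lof (a : G -> C) : list G := epsilon (inhabits nil) (fun l => NoDup l /\ covers l a).
Lemma Lof_spec a : finsupp a -> NoDup (Lof a) /\ covers (Lof a) a.
Proof. intros H. apply (epsilon_spec (inhabits nil) (fun l => NoDup l /\ covers l a)).
  apply fin_ex; auto. Qed.

Definition B (a : G -> C) : R := sumR (Lof a) (fun h => Cmod (a h)).
Lemma B_ge0 a : 0 <= B a. Proof. apply sumR_ge0; intros; apply Cmod_ge_0. Qed.

Lemma cover_mul_l l a f : covers l a -> covers l (fun h => Cmult (a h) (f h)).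
Proof. intros H h Hh. apply Cmult_nz in Hh. apply H; tauto. Qed.
Lemma fin_mul_l a f : finsupp a -> finsupp (fun h => Cmult (a h) (f h)).
Proof. intros [l H]. exists l. apply cover_mul_l; exact H. Qed.
Lemma fin_mul_r a f : finsupp a -> finsupp (fun h => Cmult (f h) (a h)).
Proof. intros [l H]. exists l. intros h Hh. apply Cmult_nz in Hh. apply H; tauto. Qed.

Lemma lam_list La a xi g : NoDup La -> covers La a ->
  lam a xi g = lsum La (fun h => Cmult (a h) (xi (mul (inv h) g))).
Proof. intros N Cv. unfold lam. apply fsum_spec; auto. apply cover_mul_l; auto. Qed.

Lemma sq_zero l : sq l (fun _ => RtoC 0) = 0.
Proof. unfold sq. induction l. apply sumR_nil. rewrite sumR_cons, IHl, Cmod_0. ring. Qed.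

Lemma mink_sum (l L : list G) (W : G -> G -> C) :
  sqrt (sq l (fun g => lsum L (fun h => W h g))) <= sumR L (fun h => sqrt (sq l (W h))).
Proof.
  induction L as [|h L IH].
  - rewrite sumR_nil. replace (fun g => lsum nil (fun h => W h g)) with (fun _ : G => RtoC 0).
    rewrite sq_zero, sqrt_0; lra. apply functional_extensionality; intros; rewrite lsum_nil; auto.
  - rewrite sumR_cons.
    replace (fun g => lsum (h :: L) (fun h0 => W h0 g)) with
      (fun g => Cplus (W h g) (lsum L (fun h0 => W h0 g)))
      by (apply functional_extensionality; intros; rewrite lsum_cons; auto).
    eapply Rle_trans. apply sq_mink. lra.
Qed.

Lemma sq_translate l xi h : sq l (fun g => xi (mul h g)) = sq (map (mul h) l) xi.
Proof. unfold sq. rewrite sumR_map. auto. Qed.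

Lemma inj_mul h : forall x y, mul h x = mul h y -> x = y.
Proof. apply m_cancel_l with (inv := inv) (e := e); auto. Qed.

Lemma lam_bound_sq a xi l : finsupp a -> in_l2 G xi -> NoDup l ->
  sqrt (sq l (lam a xi)) <= B a * sqrt (nsq xi).
Proof.
  intros Ha Hx N. destruct (Lof_spec a Ha) as [NL CL].
  replace (sq l (lam a xi)) with (sq l (fun g => lsum (Lof a) (fun h => Cmult (a h) (xi (mul (inv h) g))))).
  2:{ unfold sq. apply sumR_ext. intros g _. rewrite (lam_list (Lof a)); auto. }
  eapply Rle_trans. apply mink_sum with (W := fun h g => Cmult (a h) (xi (mul (inv h) g))).
  unfold B. rewrite Rmult_comm, <- sumR_scal.
  apply sumR_le. intros h _.
  rewrite sq_scal, sqrt_mult by (try apply pow2_ge_0; apply sq_ge0).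
  rewrite sqrt_pow2 by apply Cmod_ge_0.
  rewrite Rmult_comm. apply Rmult_le_compat_r. apply Cmod_ge_0.
  rewrite sq_translate. apply sqrt_le_1_alt. apply sq_le_nsq; auto.
  apply NoDup_map_inj; auto. apply inj_mul.
Qed.

Lemma lam_l2 a xi : finsupp a -> in_l2 G xi -> in_l2 G (lam a xi) /\ l2 (lam a xi) <= B a * l2 xi.
Proof.
  intros Ha Hx.
  assert (H0 : 0 <= B a * sqrt (nsq xi)) by (apply Rmult_le_pos; [apply B_ge0|apply sqrt_pos]).
  destruct (nsq_bound G (lam a xi) ((B a * sqrt (nsq xi)) ^ 2)) as [H1 H2].
  { intros l N. pose proof (lam_bound_sq a xi l Ha Hx N).
    rewrite <- (sqrt_sqrt (sq l (lam a xi))) by apply sq_ge0.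
    pose proof (sqrt_pos (sq l (lam a xi))). nra. }
  split; auto. rewrite !l2norm_eq. rewrite <- (sqrt_pow2 (B a * sqrt (nsq xi))) by auto.
  apply sqrt_le_1_alt; auto.
Qed.

Definition prodlist (l1 l2 : list G) : list G := flat_map (fun h => map (mul h) l2) l1.

Lemma prodlist_in l1 l2 h k : In h l1 -> In k l2 -> In (mul h k) (prodlist l1 l2).
Proof. intros H1 H2. apply in_flat_map. exists h; split; auto. apply in_map; auto. Qed.

Lemma lam_cover La Lx a xi : covers La a -> covers Lx xi -> covers (prodlist La Lx) (lam a xi).
Proof.
  intros Ha Hx g Hg. destruct (fin_ex G a (ex_intro _ La Ha)) as [L [N Cv]].
  rewrite (lam_list L) in Hg; auto. apply lsum_nz in Hg. destruct Hg as [h [_ Hh]].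
  apply Cmult_nz in Hh. destruct Hh as [H1 H2].
  rewrite <- (m_VK _ _ _ _ Hgrp h g). apply prodlist_in; auto.
Qed.

Lemma lam_fin a xi : finsupp a -> finsupp xi -> finsupp (lam a xi).
Proof. intros [La Ha] [Lx Hx]. exists (prodlist La Lx). apply lam_cover; auto. Qed.

Lemma conv_fin a b : finsupp a -> finsupp b -> finsupp (conv a b).
Proof. apply lam_fin. Qed.

Lemma star_fin a : finsupp a -> finsupp (star a).
Proof.
  intros [l H]. exists (map inv l). intros g Hg. unfold star in Hg.
  assert (a (inv g) <> RtoC 0). { intro E; apply Hg; rewrite E. apply injective_projections; simpl; ring. }
  rewrite <- (inv_inv _ _ _ _ Hgrp g). apply in_map; auto.
Qed.

Lemma star_star a : star (star a) = a.
Proof. apply functional_extensionality; intros g. unfold star. rewrite Cconj_conj, (inv_inv _ _ _ _ Hgrp). auto. Qed.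

Lemma fin_add a b : finsupp a -> finsupp b -> finsupp (fun g => Cplus (a g) (b g)).
Proof. intros [l1 H1] [l2 H2]. exists (l1 ++ l2). intros g Hg. apply Cplus_nz in Hg.
  apply in_or_app. destruct Hg; auto. Qed.
Lemma fin_scal c a : finsupp a -> finsupp (fun g => Cmult c (a g)).
Proof. intros [l H]. exists l. intros g Hg. apply Cmult_nz in Hg. apply H; tauto. Qed.

Lemma lam_add_v a xi eta : finsupp a ->
  lam a (fun g => Cplus (xi g) (eta g)) = fun g => Cplus (lam a xi g) (lam a eta g).
Proof.
  intros Ha. apply functional_extensionality; intros g. unfold lam.
  rewrite <- fsum_plus by (apply fin_mul_l; auto). f_equal.
  apply functional_extensionality; intros h. ring.
Qed.

Lemma lam_scal_v a c xi : finsupp a ->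
  lam a (fun g => Cmult c (xi g)) = fun g => Cmult c (lam a xi g).
Proof.
  intros Ha. apply functional_extensionality; intros g. unfold lam.
  rewrite <- fsum_scal by (apply fin_mul_l; auto). f_equal.
  apply functional_extensionality; intros h. ring.
Qed.

Lemma lam_add_a a b xi : finsupp a -> finsupp b ->
  lam (fun g => Cplus (a g) (b g)) xi = fun g => Cplus (lam a xi g) (lam b xi g).
Proof.
  intros Ha Hb. apply functional_extensionality; intros g. unfold lam.
  rewrite <- fsum_plus by (apply fin_mul_l; auto). f_equal.
  apply functional_extensionality; intros h. ring.
Qed.

Lemma lam_scal_a a c xi : finsupp a ->
  lam (fun g => Cmult c (a g)) xi = fun g => Cmult c (lam a xi g).
Proof.
  intros Ha. apply functional_extensionality; intros g. unfold lam.
  rewrite <- fsum_scal by (apply fin_mul_l; auto). f_equal.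
  apply functional_extensionality; intros h. ring.
Qed.

Lemma lam_zero_v a : finsupp a -> lam a (fun _ => RtoC 0) = fun _ => RtoC 0.
Proof.
  intros Ha. apply functional_extensionality; intros g. unfold lam.
  transitivity (fs (fun _ => RtoC 0)); [|apply fsum_zero].
  f_equal. apply functional_extensionality; intros h. ring.
Qed.

Definition sz (w : G) (xi : G -> C) : G -> C := fun g => xi (mul (inv w) g).

Lemma central_inv w : (forall g, mul w g = mul g w) -> forall g, mul (inv w) g = mul g (inv w).
Proof.
  intros H g. apply (m_cancel_l _ _ _ _ Hgrp w). rewrite (m_VK _ _ _ _ Hgrp), H.
  rewrite <- (m_assoc _ _ _ _ Hgrp), (m_Vl _ _ _ _ Hgrp), (m_1r _ _ _ _ Hgrp). auto.
Qed.

Lemma lam_sz a w xi : (forall g, mul w g = mul g w) -> lam a (sz w xi) = sz w (lam a xi).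
Proof.
  intros Hw. apply functional_extensionality; intros g. unfold lam, sz. cbv beta. f_equal.
  apply functional_extensionality; intros h.
  replace (mul (inv w) (mul (inv h) g)) with (mul (inv h) (mul (inv w) g)); auto.
  rewrite !(m_assoc _ _ _ _ Hgrp), (central_inv w Hw (inv h)); auto.
Qed.

Lemma sz_fin w xi : finsupp xi -> finsupp (sz w xi).
Proof. intros [l H]. exists (map (mul w) l). intros g Hg. apply H in Hg.
  rewrite <- (m_VK _ _ _ _ Hgrp w g). apply in_map; auto. Qed.

Lemma l2_sz w xi : finsupp xi -> l2 (sz w xi) = l2 xi.
Proof.
  intros Hx. destruct (fin_ex G xi Hx) as [l [N Cv]].
  assert (Cv' : covers (map (mul w) l) (sz w xi)).
  { intros g Hg. apply Cv in Hg. rewrite <- (m_VK _ _ _ _ Hgrp w g). apply in_map; auto. }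
  assert (N' : NoDup (map (mul w) l)) by (apply NoDup_map_inj; auto; apply inj_mul).
  rewrite !l2norm_eq. destruct (nsq_fin G (map (mul w) l) (sz w xi) N' Cv') as [_ ->].
  destruct (nsq_fin G l xi N Cv) as [_ ->]. f_equal. unfold sq. rewrite sumR_map.
  apply sumR_ext. intros. unfold sz. rewrite (m_KV _ _ _ _ Hgrp). auto.
Qed.

Lemma lam_conv a b xi : finsupp a -> finsupp b -> lam (conv a b) xi = lam a (lam b xi).
Proof.
  intros Ha Hb. destruct (fin_ex G a Ha) as [La [NA CA]]. destruct (fin_ex G b Hb) as [Lb [NB CB]].
  apply functional_extensionality; intros g.
  set (Lab := nodup (Gdec_gen G) (prodlist La Lb)).
  assert (NAB : NoDup Lab) by apply NoDup_nodup.
  assert (CAB : covers Lab (conv a b)).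
  { intros k Hk. apply nodup_In. apply (lam_cover La Lb a b CA CB k Hk). }
  rewrite (lam_list Lab) by auto. rewrite (lam_list La) by auto.
  replace (lsum Lab (fun h => Cmult (conv a b h) (xi (mul (inv h) g)))) with
    (lsum Lab (fun k => lsum La (fun h => Cmult (a h) (Cmult (b (mul (inv h) k)) (xi (mul (inv k) g)))))).
  2:{ apply lsum_ext. intros k _. unfold conv. rewrite (fsum_spec G La) by (auto; apply cover_mul_l; auto).
      rewrite <- lsum_scalr. apply lsum_ext. intros; ring. }
  rewrite lsum_swap. apply lsum_ext. intros h Hh. rewrite lsum_scal. f_equal.
  rewrite (lam_list Lb) by auto.
  rewrite <- (fsum_spec G Lab).
  2: auto.
  2:{ intros k Hk. apply Cmult_nz in Hk. destruct Hk as [Hk _]. apply nodup_In.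
      rewrite <- (m_VK _ _ _ _ Hgrp h k). apply prodlist_in; auto. }
  rewrite <- (fsum_spec G Lb) by (auto; apply cover_mul_l; auto).
  rewrite <- (fsum_lmul _ _ _ _ Hgrp _ h).
  - unfold P2.fs. f_equal. apply functional_extensionality; intros k.
    rewrite (m_KV _ _ _ _ Hgrp), (inv_mul _ _ _ _ Hgrp), (m_assoc _ _ _ _ Hgrp). auto.
  - exists (map (mul h) Lb). intros k Hk. apply Cmult_nz in Hk. destruct Hk as [Hk _].
    rewrite <- (m_VK _ _ _ _ Hgrp h k). apply in_map; auto.
Qed.

End Lam.

End P4.
Import P4.

Module P5.
Open Scope R_scope.

Section IP.
Variables (G : Type) (mul : G -> G -> G) (inv : G -> G) (e : G).
Hypothesis Hgrp : is_group mul inv e.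

Notation fs := (fs G).
Notation lsum := (lsum G).
Notation sumR := (sumR G).
Notation covers := (covers G).
Notation finsupp := (finsupp G).
Notation sq := (sq G).
Notation nsq := (nsq G).
Notation l2 := (l2norm G).
Notation lam := (lam G mul inv).
Notation star := (star G inv).

Definition ip (xi eta : G -> C) : C := fs (fun g => Cmult (xi g) (Cconj (eta g))).

Lemma lsum_self l f : lsum l (fun g => Cmult (f g) (Cconj (f g))) = RtoC (sumR l (fun g => Cmod (f g) ^ 2)).
Proof.
  induction l. rewrite lsum_nil, sumR_nil; auto.
  rewrite lsum_cons, sumR_cons, IHl, RtoC_plus, Cmod2_conj. auto.
Qed.

Lemma ip_self xi : finsupp xi -> ip xi xi = RtoC (nsq xi).
Proof.
  intros H. destruct (fin_ex G xi H) as [l [N Cv]]. destruct (nsq_fin G l xi N Cv) as [_ ->].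
  unfold ip. rewrite (fsum_spec G l) by (auto; apply cover_mul_l; auto). apply lsum_self.
Qed.

Lemma ip_self_l2 xi : finsupp xi -> ip xi xi = RtoC (l2 xi ^ 2).
Proof. intros H. rewrite ip_self by auto. rewrite l2norm_eq. rewrite pow2_sqrt; auto.
  apply nsq_ge0, fin_l2; auto. Qed.

Lemma ip_CS xi eta : finsupp xi -> finsupp eta -> Cmod (ip xi eta) <= l2 xi * l2 eta.
Proof.
  intros Hx Hy. destruct Hx as [l1 H1]. destruct Hy as [l2 H2].
  set (l := nodup (Gdec_gen G) (l1 ++ l2)).
  assert (N : NoDup l) by apply NoDup_nodup.
  assert (C1 : covers l xi) by (intros g Hg; apply nodup_In, in_or_app; auto).
  assert (C2 : covers l eta) by (intros g Hg; apply nodup_In, in_or_app; auto).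
  unfold ip. rewrite (fsum_spec G l) by (auto; apply cover_mul_l; auto).
  rewrite !l2norm_eq. destruct (nsq_fin G l xi N C1) as [_ ->]. destruct (nsq_fin G l eta N C2) as [_ ->].
  eapply Rle_trans. apply lsum_mod.
  eapply Rle_trans. 2: apply CS_real. apply Req_le. apply sumR_ext. intros.
  rewrite Cmod_mult, Cmod_conj. auto.
Qed.

Lemma ip_conj xi eta : finsupp xi -> ip eta xi = Cconj (ip xi eta).
Proof.
  intros H. unfold ip. rewrite fsum_conj by (apply fin_mul_l; auto).
  f_equal. apply functional_extensionality; intros g. rewrite Cmult_conj, Cconj_conj. ring.
Qed.

Lemma fin_of_zero (F : G -> G -> C) l : (forall h g, F h g <> RtoC 0 -> In h l) -> finsupp (fun h => fs (F h)).
Proof.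
  intros H. exists l. intros h Hh. destruct (excluded_middle_informative (In h l)); auto.
  exfalso. apply Hh. replace (F h) with (fun _ : G => RtoC 0). apply fsum_zero.
  apply functional_extensionality; intros g. destruct (excluded_middle_informative (F h g = RtoC 0)); auto.
  exfalso; apply n; eapply H; eauto.
Qed.

Lemma fsum_scalr c f : finsupp f -> Cmult (fs f) c = fs (fun g => Cmult (f g) c).
Proof. intros H. rewrite Cmult_comm, <- fsum_scal by auto. f_equal.
  apply functional_extensionality; intros; ring. Qed.

Lemma ip_adj a zeta eta : finsupp a -> finsupp zeta -> finsupp eta ->
  ip zeta (lam a eta) = ip (lam (star a) zeta) eta.
Proof.
  intros Ha Hz He.
  destruct Ha as [La CA]. destruct Hz as [Lz CZ]. destruct He as [Le CE].
  assert (Ha : finsupp a) by (exists La; auto).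
  assert (Hz : finsupp zeta) by (exists Lz; auto).
  assert (He : finsupp eta) by (exists Le; auto).
  unfold ip.
  transitivity (fs (fun g => fs (fun h => Cmult (zeta g) (Cconj (Cmult (a h) (eta (mul (inv h) g))))))).
  { f_equal. apply functional_extensionality; intros g. unfold P4.lam.
    rewrite fsum_conj by (apply fin_mul_l; auto). rewrite <- fsum_scal; auto.
    exists La. intros h Hh. apply CA. intro E; apply Hh. rewrite E. apply injective_projections; simpl; ring. }
  transitivity (fs (fun g => fs (fun h => Cmult (Cmult (star a h) (zeta (mul (inv h) g))) (Cconj (eta g))))).
  2:{ f_equal. apply functional_extensionality; intros g. unfold P4.lam.
      rewrite fsum_scalr; auto. apply fin_mul_l. apply (star_fin _ _ _ _ Hgrp); auto. }
  rewrite (fsum_swap G _ Lz La).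
  2:{ intros g h Hgh. apply Cmult_nz in Hgh. destruct Hgh as [H1 H2]. split. apply CZ; auto.
      apply CA. intro E; apply H2. rewrite E. apply injective_projections; simpl; ring. }
  symmetry.
  rewrite (fsum_swap G _ Le (map inv La)).
  2:{ intros g h Hgh. apply Cmult_nz in Hgh. destruct Hgh as [H1 H2]. apply Cmult_nz in H1.
      destruct H1 as [H1 _]. split.
      - apply CE. intro E; apply H2. rewrite E. apply injective_projections; simpl; ring.
      - unfold P4.star in H1. rewrite <- (inv_inv _ _ _ _ Hgrp h). apply in_map. apply CA.
        intro E; apply H1. rewrite E. apply injective_projections; simpl; ring. }
  transitivity (fs (fun h => fs (fun g => Cmult (Cmult (star a h) (zeta g)) (Cconj (eta (mul h g)))))).
  { f_equal. apply functional_extensionality; intros h.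
      rewrite <- (fsum_lmul _ _ _ _ Hgrp _ h).
      - f_equal. apply functional_extensionality; intros g. rewrite (m_KV _ _ _ _ Hgrp). auto.
      - exists Le. intros g Hg. apply Cmult_nz in Hg. destruct Hg as [_ H2]. apply CE.
        intro E; apply H2. rewrite E. apply injective_projections; simpl; ring. }
  rewrite <- (fsum_inv _ _ _ _ Hgrp).
  2:{ apply (fin_of_zero _ (map inv La)). intros h g Hhg. apply Cmult_nz in Hhg.
      destruct Hhg as [H1 _]. apply Cmult_nz in H1. destruct H1 as [H1 _].
      unfold P4.star in H1. rewrite <- (inv_inv _ _ _ _ Hgrp h). apply in_map. apply CA.
      intro E; apply H1. rewrite E. apply injective_projections; simpl; ring. }
  f_equal. apply functional_extensionality; intros h. f_equal.
  apply functional_extensionality; intros g. unfold P4.star. rewrite (inv_inv _ _ _ _ Hgrp).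
  rewrite Cmult_conj. ring.
Qed.

End IP.

End P5.
Import P5.

Module P6.
Open Scope R_scope.

Section NDef.
Variables (G : Type) (mul : G -> G -> G) (inv : G -> G) (e : G).
Hypothesis Hgrp : is_group mul inv e.
Variable z : G.
Hypothesis Hzc : forall g, mul z g = mul g z.

Notation fs := (fs G).
Notation finsupp := (finsupp G).
Notation l2 := (l2norm G).
Notation lam := (lam G mul inv).
Notation sz := (sz G mul inv z).

Definition Kt (t : C) : Prop := fst t <= 0 /\ Cmod t = 1.
Definition dvec (t : C) (eta : G -> C) : G -> C := fun g => Cminus (sz eta g) (Cmult t (eta g)).
Definition apx (eps : R) (eta : G -> C) : Prop := exists t, Kt t /\ l2 (dvec t eta) <= eps.
Definition adm (eps : R) (eta : G -> C) : Prop := finsupp eta /\ l2 eta <= 1 /\ apx eps eta.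
Definition Sset (a : G -> C) (eps : R) : R -> Prop := fun r => exists eta, adm eps eta /\ r = l2 (lam a eta).
Definition M (a : G -> C) (eps : R) : R := sup (Sset a eps).
Definition Tset (a : G -> C) : R -> Prop := fun r => exists eps, 0 < eps /\ r = - M a eps.
Definition N (a : G -> C) : R := - sup (Tset a).

Lemma Kt_m1 : Kt (RtoC (-1)).
Proof. split. simpl; lra. rewrite Cmod_R. rewrite Rabs_left; lra. Qed.

Lemma zero_fin : finsupp (fun _ => RtoC 0).
Proof. exists nil. intros g H; apply H; auto. Qed.

Lemma l2_zero : l2 (fun _ : G => RtoC 0) = 0.
Proof.
  rewrite l2norm_eq. destruct (nsq_fin G nil (fun _ => RtoC 0)) as [_ ->]. constructor.
  intros g H; apply H; auto. unfold sq. rewrite sumR_nil. apply sqrt_0.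
Qed.

Lemma adm_zero eps : 0 <= eps -> adm eps (fun _ => RtoC 0).
Proof.
  intros He. split. apply zero_fin. split. rewrite l2_zero; lra.
  exists (RtoC (-1)). split. apply Kt_m1.
  replace (dvec (RtoC (-1)) (fun _ => RtoC 0)) with (fun _ : G => RtoC 0). rewrite l2_zero; auto.
  apply functional_extensionality; intros; unfold dvec, P4.sz. ring.
Qed.

Lemma S_ne a eps : finsupp a -> 0 <= eps -> Sset a eps 0.
Proof.
  intros Ha He. exists (fun _ => RtoC 0). split. apply adm_zero; auto.
  rewrite (lam_zero_v G mul inv a Ha). rewrite l2_zero; auto.
Qed.

Lemma S_le a eps r : finsupp a -> Sset a eps r -> r <= B G a.
Proof.
  intros Ha [eta [[Hf [Hn _]] ->]]. destruct (lam_l2 G mul inv e Hgrp a eta Ha (fin_l2 G eta Hf)) as [_ H].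
  pose proof (B_ge0 G a). pose proof (l2norm_ge0 G eta). nra.
Qed.

Lemma S_bound a eps : finsupp a -> bound (Sset a eps).
Proof. intros Ha. exists (B G a). intros r Hr. apply (S_le a eps); auto. Qed.

Lemma M_ub a eps eta : finsupp a -> adm eps eta -> l2 (lam a eta) <= M a eps.
Proof. intros Ha H. apply sup_ub. apply S_bound; auto. exists eta; auto. Qed.

Lemma M_least a eps c : finsupp a -> 0 <= eps -> (forall eta, adm eps eta -> l2 (lam a eta) <= c) -> M a eps <= c.
Proof. intros Ha He H. apply sup_least. exists 0; apply S_ne; auto.
  intros r [eta [Hx ->]]. auto. Qed.

Lemma M_ge0 a eps : finsupp a -> 0 <= eps -> 0 <= M a eps.
Proof. intros Ha He. apply sup_ub. apply S_bound; auto. apply S_ne; auto. Qed.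

Lemma M_le_B a eps : finsupp a -> 0 <= eps -> M a eps <= B G a.
Proof. intros Ha He. apply sup_least. exists 0; apply S_ne; auto. intros; eapply S_le; eauto. Qed.

Lemma adm_mono eps1 eps2 eta : eps1 <= eps2 -> adm eps1 eta -> adm eps2 eta.
Proof. intros H [H1 [H2 [t [Ht Hd]]]]. split; auto. split; auto. exists t; split; auto; lra. Qed.

Lemma M_mono a eps1 eps2 : finsupp a -> 0 <= eps1 -> eps1 <= eps2 -> M a eps1 <= M a eps2.
Proof. intros Ha H1 H2. apply M_least; auto. intros eta Heta. apply M_ub; auto.
  apply (adm_mono eps1); auto. Qed.

Lemma T_bound a : finsupp a -> bound (Tset a).
Proof. intros Ha. exists 0. intros r [eps [He ->]]. pose proof (M_ge0 a eps Ha). lra. Qed.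
Lemma T_ne a : exists r, Tset a r.
Proof. exists (- M a 1). exists 1; split; auto; lra. Qed.

Lemma N_le_M a eps : finsupp a -> 0 < eps -> N a <= M a eps.
Proof. intros Ha He. unfold N. assert (- M a eps <= sup (Tset a)).
  { apply sup_ub. apply T_bound; auto. exists eps; auto. } lra. Qed.

Lemma N_ge a c : finsupp a -> (forall eps, 0 < eps -> c <= M a eps) -> c <= N a.
Proof. intros Ha H. unfold N. assert (sup (Tset a) <= - c).
  { apply sup_least. apply T_ne. intros r [eps [He ->]]. specialize (H eps He). lra. } lra. Qed.

Lemma N_ge0 a : finsupp a -> 0 <= N a.
Proof. intros Ha. apply N_ge; auto. intros; apply M_ge0; auto; lra. Qed.

Lemma N_approx a d : finsupp a -> 0 < d -> exists eps, 0 < eps /\ forall eps', 0 <= eps' -> eps' <= eps -> M a eps' <= N a + d.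
Proof.
  intros Ha Hd. destruct (sup_approx (Tset a) d (T_bound a Ha) (T_ne a) Hd) as [r [[eps [He ->]] Hr]].
  exists eps. split; auto. intros eps' H1 H2. pose proof (M_mono a eps' eps Ha H1 H2). unfold N. lra.
Qed.

Lemma N_le a c : finsupp a -> (forall eps, 0 < eps -> N a <= M a eps -> exists eps', 0 < eps' /\ M a eps' <= c) -> N a <= c.
Proof. intros Ha H. destruct (H 1 ltac:(lra) (N_le_M a 1 Ha ltac:(lra))) as [eps' [H1 H2]].
  pose proof (N_le_M a eps' Ha H1). lra. Qed.

End NDef.

End P6.
Import P6.

Module P7.
Open Scope R_scope.

Ltac cnorm := try change C0 with (RtoC 0) in *; try change Cadd with Cplus in *;
  try change Cmul with Cmult in *; try change Defs.Cconj with Cconj in *.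
Ltac cring := cnorm; match goal with |- ?a = ?b => change (@eq C a b) end; ring.
Ltac cfield := cnorm; match goal with |- ?a = ?b => change (@eq C a b) end; field.

Lemma Cinv_cancel (u c : C) : c <> RtoC 0 -> Cmult (Cinv c) (Cmult c u) = u.
Proof. intros; field; auto. Qed.

Section CstarProps.
Variables (G : Type) (mul : G -> G -> G) (inv : G -> G) (e : G).
Hypothesis Hgrp : is_group mul inv e.
Variable z : G.
Hypothesis Hzc : forall g, mul z g = mul g z.

Notation fs := (fs G).
Notation finsupp := (finsupp G).
Notation l2 := (l2norm G).
Notation lam := (lam G mul inv).
Notation sz := (sz G mul inv z).
Notation B := (P4.B G).
Notation M := (P6.M G mul inv z).
Notation N := (P6.N G mul inv z).
Notation adm := (P6.adm G mul inv z).
Notation dvec := (P6.dvec G mul inv z).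
Notation Kt := Kt.

Lemma lamB a xi : finsupp a -> finsupp xi -> l2 (lam a xi) <= B a * l2 xi.
Proof. intros Ha Hx. apply (lam_l2 G mul inv e Hgrp); auto. apply fin_l2; auto. Qed.

Lemma l2_tri xi eta : finsupp xi -> finsupp eta ->
  l2 (fun g => Cplus (xi g) (eta g)) <= l2 xi + l2 eta.
Proof. intros Hx He. apply (l2_add G); apply fin_l2; auto. Qed.

Lemma l2sc c xi : finsupp xi -> l2 (fun g => Cmult c (xi g)) = Cmod c * l2 xi.
Proof. intros Hx. apply l2norm_scal, fin_l2; auto. Qed.

Lemma dvec_fin t eta : finsupp eta -> finsupp (dvec t eta).
Proof.
  intros Hx. assert (Hs := sz_fin G mul inv e Hgrp z eta Hx).
  destruct Hs as [l1 H1]. destruct Hx as [l2 H2]. exists (l1 ++ l2). intros g Hg.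
  unfold dvec in Hg. apply in_or_app.
  destruct (excluded_middle_informative (P4.sz G mul inv z eta g = RtoC 0)) as [E|E]; auto.
  right. apply H2. intro E2. apply Hg. rewrite E, E2. cring.
Qed.

Lemma dvec_lam t b eta : finsupp b -> dvec t (lam b eta) = lam b (dvec t eta).
Proof.
  intros Hb. unfold dvec.
  replace (fun g => Cminus (sz eta g) (Cmult t (eta g))) with
    (fun g => Cplus (sz eta g) (Cmult (Copp t) (eta g))) by (apply functional_extensionality; intros; ring).
  rewrite (lam_add_v G mul inv); auto. rewrite (lam_scal_v G mul inv); auto.
  rewrite (lam_sz G mul inv e Hgrp); auto.
  apply functional_extensionality; intros; ring.
Qed.

Lemma dvec_scal t c eta : dvec t (fun g => Cmult c (eta g)) = fun g => Cmult c (dvec t eta g).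
Proof. apply functional_extensionality; intros; unfold dvec, P4.sz; ring. Qed.

Lemma Mbound a zeta t delta : finsupp a -> finsupp zeta -> Kt t -> 0 < delta ->
  l2 (lam a zeta) <= Rmax (B a * delta) (l2 zeta * M a (l2 (dvec t zeta) / delta)).
Proof.
  intros Ha Hz Ht Hd. set (n := l2 zeta).
  destruct (Rle_dec n delta) as [Hn|Hn].
  - apply Rle_trans with (B a * delta). 2: apply Rmax_l.
    pose proof (lamB a zeta Ha Hz). pose proof (B_ge0 G a). fold n in H. nra.
  - apply Rle_trans with (n * M a (l2 (dvec t zeta) / delta)). 2: apply Rmax_r.
    assert (Hn0 : 0 < n) by lra.
    set (zeta' := fun g => Cmult (RtoC (/ n)) (zeta g)).
    assert (Hz' : finsupp zeta') by (apply fin_scal; auto).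
    assert (Cn : Cmod (RtoC (/ n)) = / n) by (rewrite Cmod_R; apply Rabs_right; left; apply Rinv_0_lt_compat; auto).
    assert (Hd0 : 0 <= l2 (dvec t zeta)) by apply l2norm_ge0.
    assert (Adm : adm (l2 (dvec t zeta) / delta) zeta').
    { split; auto. split.
      - unfold zeta'. rewrite l2sc, Cn by auto. fold n. rewrite Rinv_l; lra.
      - exists t. split; auto. unfold zeta'. rewrite dvec_scal, l2sc, Cn by (apply dvec_fin; auto).
        unfold Rdiv. rewrite Rmult_comm. apply Rmult_le_compat_l; auto.
        apply Rinv_le_contravar; lra. }
    pose proof (M_ub G mul inv e Hgrp z a _ zeta' Ha Adm) as HM.
    unfold zeta' in HM. rewrite (lam_scal_v G mul inv) in HM by auto.
    rewrite l2sc, Cn in HM by (apply (lam_fin G mul inv e Hgrp); auto).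
    apply Rmult_le_compat_l with (r := n) in HM; [|lra].
    rewrite <- Rmult_assoc, Rinv_r, Rmult_1_l in HM; lra.
Qed.

Lemma N_le_of x c : finsupp x -> (forall gam, 0 < gam -> exists eps, 0 < eps /\ M x eps <= c + gam) -> N x <= c.
Proof.
  intros Hx H. destruct (Rle_dec (N x) c) as [L|L]; auto. exfalso.
  destruct (H ((N x - c) / 2)) as [eps [He HM]]. lra.
  pose proof (N_le_M G mul inv e Hgrp z x eps Hx He). lra.
Qed.

Lemma N_triangle a b : finsupp a -> finsupp b ->
  N (fun g => Cplus (a g) (b g)) <= N a + N b.
Proof.
  intros Ha Hb. apply N_le_of. apply fin_add; auto. intros gam Hg.
  destruct (N_approx G mul inv e Hgrp z a (gam / 2) Ha ltac:(lra)) as [ea [Hea Ha']].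
  destruct (N_approx G mul inv e Hgrp z b (gam / 2) Hb ltac:(lra)) as [eb [Heb Hb']].
  exists (Rmin ea eb). split. apply Rmin_glb_lt; auto.
  pose proof (Rmin_l ea eb). pose proof (Rmin_r ea eb).
  assert (0 <= Rmin ea eb) by (apply Rmin_glb; lra).
  specialize (Ha' (Rmin ea eb) H1 H). specialize (Hb' (Rmin ea eb) H1 H0).
  apply Rle_trans with (M a (Rmin ea eb) + M b (Rmin ea eb)); [|lra].
  apply M_least; auto. apply fin_add; auto. intros eta Heta.
  rewrite (lam_add_a G mul inv) by auto.
  eapply Rle_trans. apply l2_tri; apply (lam_fin G mul inv e Hgrp); auto. apply Heta. apply Heta.
  pose proof (M_ub G mul inv e Hgrp z a _ eta Ha Heta). pose proof (M_ub G mul inv e Hgrp z b _ eta Hb Heta). lra.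
Qed.

Lemma N_scal_le c a : finsupp a -> N (fun g => Cmult c (a g)) <= Cmod c * N a.
Proof.
  intros Ha. apply N_le_of. apply fin_scal; auto. intros gam Hg.
  pose proof (Cmod_ge_0 c).
  destruct (N_approx G mul inv e Hgrp z a (gam / (Cmod c + 1)) Ha) as [ea [Hea Ha']].
  apply Rdiv_lt_0_compat; lra.
  exists ea. split; auto. specialize (Ha' ea ltac:(lra) ltac:(lra)).
  apply Rle_trans with (Cmod c * M a ea).
  - apply M_least; auto. apply fin_scal; auto. lra. intros eta Heta.
    rewrite (lam_scal_a G mul inv) by auto. rewrite l2sc by (apply (lam_fin G mul inv e Hgrp); auto; apply Heta).
    apply Rmult_le_compat_l; auto. apply (M_ub G mul inv e Hgrp z); auto.
  - assert (H2 : Cmod c * (gam / (Cmod c + 1)) <= gam).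
    { apply Rmult_le_reg_r with (Cmod c + 1); [lra|].
      replace (Cmod c * (gam / (Cmod c + 1)) * (Cmod c + 1)) with (Cmod c * gam) by (field; lra). nra. }
    apply Rmult_le_compat_l with (r := Cmod c) in Ha'; auto. nra.
Qed.

Lemma N_homog c a : finsupp a -> N (fun g => Cmult c (a g)) = Cmod c * N a.
Proof.
  intros Ha. apply Rle_antisym. apply N_scal_le; auto.
  destruct (excluded_middle_informative (c = RtoC 0)) as [E|E].
  - subst c. rewrite Cmod_0. rewrite Rmult_0_l. apply (N_ge0 G mul inv e Hgrp). apply fin_scal; auto.
  - pose proof (N_scal_le (Cinv c) (fun g => Cmult c (a g)) (fin_scal G c a Ha)) as H.
    rewrite Cmod_inv in H by auto.
    assert (H' : N a = N (fun g => Cmult (Cinv c) (Cmult c (a g)))).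
    { f_equal. apply functional_extensionality; intros; rewrite Cinv_cancel; auto. }
    rewrite H'. apply Cmod_gt_0 in E.
    apply Rle_trans with (Cmod c * (/ Cmod c * N (fun g => Cmult c (a g)))).
    + apply Rmult_le_compat_l; [lra | exact H].
    + right; field; lra.
Qed.

Lemma N_submult a b : finsupp a -> finsupp b -> N (conv G mul inv a b) <= N a * N b.
Proof.
  intros Ha Hb. apply N_le_of. apply (conv_fin G mul inv e Hgrp); auto. intros gam Hg.
  pose proof (N_ge0 G mul inv e Hgrp z a Ha) as HNa. pose proof (N_ge0 G mul inv e Hgrp z b Hb) as HNb.
  set (Na := N a) in *. set (Nb := N b) in *.
  pose proof (B_ge0 G a) as HBa. pose proof (B_ge0 G b) as HBb.
  set (delta := gam / (B a + 1)).
  assert (Hd : 0 < delta) by (apply Rdiv_lt_0_compat; lra).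
  assert (HBd : B a * delta < gam).
  { unfold delta in *. apply Rlt_le_trans with ((B a + 1) * (gam / (B a + 1))). nra. right; field; lra. }
  set (rho := Rmin 1 (gam / (Na + Nb + 1))).
  assert (Hr : 0 < rho) by (apply Rmin_glb_lt; [lra | apply Rdiv_lt_0_compat; lra]).
  assert (Hr1 : rho <= 1) by apply Rmin_l.
  assert (Hr2 : rho * (Na + Nb + 1) <= gam).
  { apply Rle_trans with (gam / (Na + Nb + 1) * (Na + Nb + 1)). apply Rmult_le_compat_r. lra. apply Rmin_r.
    right; field; lra. }
  destruct (N_approx G mul inv e Hgrp z a rho Ha Hr) as [ea [Hea Ha']].
  destruct (N_approx G mul inv e Hgrp z b rho Hb Hr) as [eb [Heb Hb']].
  set (eps := Rmin eb (ea * delta / (B b + 1))).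
  assert (He : 0 < eps).
  { apply Rmin_glb_lt; auto. apply Rdiv_lt_0_compat; [apply Rmult_lt_0_compat|]; lra. }
  assert (He1 : eps <= eb) by apply Rmin_l.
  assert (He2 : eps <= ea * delta / (B b + 1)) by apply Rmin_r.
  assert (He3 : B b * eps / delta <= ea).
  { apply Rle_trans with ((B b + 1) * eps / delta).
    unfold Rdiv. apply Rmult_le_compat_r. left; apply Rinv_0_lt_compat; auto. nra.
    apply Rle_trans with ((B b + 1) * (ea * delta / (B b + 1)) / delta).
    unfold Rdiv. apply Rmult_le_compat_r. left; apply Rinv_0_lt_compat; auto. nra.
    right. field. lra. }
  exists eps. split; auto.
  apply M_least; auto. apply (conv_fin G mul inv e Hgrp); auto. lra. intros eta Heta.
  destruct Heta as [Hfe [Hne [t [Ht Hdv]]]].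
  rewrite (lam_conv G mul inv e Hgrp) by auto.
  set (zeta := lam b eta).
  assert (Hz : finsupp zeta) by (apply (lam_fin G mul inv e Hgrp); auto).
  assert (Hzn : l2 zeta <= Nb + rho).
  { apply Rle_trans with (M b eps). apply (M_ub G mul inv e Hgrp z); auto. split; auto. split; auto. exists t; auto.
    apply Hb'; lra. }
  assert (Hzd : l2 (dvec t zeta) <= B b * eps).
  { unfold zeta. rewrite dvec_lam by auto. eapply Rle_trans. apply lamB; auto. apply dvec_fin; auto.
    apply Rmult_le_compat_l; auto. }
  pose proof (Mbound a zeta t delta Ha Hz Ht Hd) as HMb.
  assert (HMa : M a (l2 (dvec t zeta) / delta) <= Na + rho).
  { apply Ha'. apply Rmult_le_pos. apply l2norm_ge0. left; apply Rinv_0_lt_compat; auto.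
    apply Rle_trans with (B b * eps / delta); auto. unfold Rdiv. apply Rmult_le_compat_r; auto.
    left; apply Rinv_0_lt_compat; auto. }
  assert (HMa0 : 0 <= M a (l2 (dvec t zeta) / delta)).
  { apply (M_ge0 G mul inv e Hgrp); auto. apply Rmult_le_pos. apply l2norm_ge0. left; apply Rinv_0_lt_compat; auto. }
  assert (l2 zeta * M a (l2 (dvec t zeta) / delta) <= Na * Nb + gam).
  { pose proof (l2norm_ge0 G zeta).
    apply Rle_trans with ((Nb + rho) * (Na + rho)). apply Rmult_le_compat; auto. nra. }
  eapply Rle_trans. apply HMb. apply Rmax_lub; nra.
Qed.

Lemma N_star a : finsupp a -> N (star G inv a) <= N a.
Proof.
  intros Ha. assert (Hsa : finsupp (star G inv a)) by (apply (star_fin G mul inv e Hgrp); auto).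
  apply N_le_of; auto. intros gam Hg.
  pose proof (N_ge0 G mul inv e Hgrp z a Ha) as HNa. set (Na := N a) in *.
  pose proof (B_ge0 G a) as HBa.
  set (delta := gam * gam / (B a + 1)).
  assert (Hd : 0 < delta) by (apply Rdiv_lt_0_compat; nra).
  assert (HBd : B a * delta < gam * gam).
  { unfold delta in *. apply Rlt_le_trans with ((B a + 1) * (gam * gam / (B a + 1))). nra. right; field; lra. }
  destruct (N_approx G mul inv e Hgrp z a gam Ha Hg) as [ea [Hea Ha']].
  set (eps := ea * delta / (B (star G inv a) + 1)).
  pose proof (B_ge0 G (star G inv a)) as HBs.
  assert (He : 0 < eps) by (apply Rdiv_lt_0_compat; [apply Rmult_lt_0_compat|]; lra).
  assert (He3 : B (star G inv a) * eps / delta <= ea).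
  { apply Rle_trans with ((B (star G inv a) + 1) * eps / delta).
    unfold Rdiv. apply Rmult_le_compat_r. left; apply Rinv_0_lt_compat; auto. nra.
    right. unfold eps. field. lra. }
  exists eps. split; auto.
  apply M_least; auto. lra. intros eta Heta.
  destruct Heta as [Hfe [Hne [t [Ht Hdv]]]].
  set (zeta := lam (star G inv a) eta).
  assert (Hz : finsupp zeta) by (apply (lam_fin G mul inv e Hgrp); auto).
  assert (Hzd : l2 (dvec t zeta) <= B (star G inv a) * eps).
  { unfold zeta. rewrite dvec_lam by auto. eapply Rle_trans. apply lamB; auto. apply dvec_fin; auto.
    apply Rmult_le_compat_l; auto. }
  pose proof (Mbound a zeta t delta Ha Hz Ht Hd) as HMb.
  assert (HMa : M a (l2 (dvec t zeta) / delta) <= Na + gam).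
  { apply Ha'. apply Rmult_le_pos. apply l2norm_ge0. left; apply Rinv_0_lt_compat; auto.
    apply Rle_trans with (B (star G inv a) * eps / delta); auto. unfold Rdiv. apply Rmult_le_compat_r; auto.
    left; apply Rinv_0_lt_compat; auto. }
  assert (HMa0 : 0 <= M a (l2 (dvec t zeta) / delta)).
  { apply (M_ge0 G mul inv e Hgrp); auto. apply Rmult_le_pos. apply l2norm_ge0. left; apply Rinv_0_lt_compat; auto. }
  assert (Hsq : l2 zeta ^ 2 <= l2 (lam a zeta)).
  { assert (E : ip G zeta zeta = Cconj (ip G (lam a zeta) eta)).
    { unfold zeta at 1. rewrite (ip_conj G) by auto.
      rewrite (ip_adj G mul inv e Hgrp) by (auto; apply (star_fin G mul inv e Hgrp); auto).
      rewrite (star_star G mul inv e Hgrp). auto. }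
    rewrite (ip_self_l2 G) in E by auto.
    assert (Cmod (RtoC (l2 zeta ^ 2)) <= l2 (lam a zeta)).
    { rewrite E, Cmod_conj. eapply Rle_trans. apply ip_CS; auto. apply (lam_fin G mul inv e Hgrp); auto.
      pose proof (l2norm_ge0 G (lam a zeta)). nra. }
    rewrite Cmod_R, Rabs_right in H; auto. apply Rle_ge, pow2_ge_0. }
  pose proof (l2norm_ge0 G zeta).
  set (x := l2 zeta) in *. set (m := M a (l2 (dvec t zeta) / delta)) in *.
  assert (Hx : x ^ 2 <= Rmax (B a * delta) (x * m)) by lra.
  destruct (Rle_dec x (Na + gam)); auto. exfalso.
  destruct (Rle_dec (B a * delta) (x * m)) as [Hc|Hc].
  - rewrite Rmax_right in Hx by auto. nra.
  - rewrite Rmax_left in Hx by lra. nra.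
Qed.

Lemma N_cstar a : finsupp a -> N (conv G mul inv (star G inv a) a) = N a ^ 2.
Proof.
  intros Ha. assert (Hsa : finsupp (star G inv a)) by (apply (star_fin G mul inv e Hgrp); auto).
  assert (Hc : finsupp (conv G mul inv (star G inv a) a)) by (apply (conv_fin G mul inv e Hgrp); auto).
  pose proof (N_ge0 G mul inv e Hgrp z a Ha). pose proof (N_ge0 G mul inv e Hgrp z _ Hsa).
  apply Rle_antisym.
  - eapply Rle_trans. apply N_submult; auto. pose proof (N_star a Ha). simpl. nra.
  - apply (N_ge G mul inv z); auto. intros eps He.
    assert (HM : M a eps ^ 2 <= M (conv G mul inv (star G inv a) a) eps).
    { pose proof (M_ge0 G mul inv e Hgrp z _ eps Hc ltac:(lra)) as Hc0.
      assert (M a eps <= sqrt (M (conv G mul inv (star G inv a) a) eps)).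
      { apply (M_least G mul inv z); auto. lra. intros eta Heta.
        destruct Heta as [Hfe [Hne Hap]].
        assert (Hl : finsupp (lam a eta)) by (apply (lam_fin G mul inv e Hgrp); auto).
        assert (E : ip G (lam a eta) (lam a eta) = ip G (lam (conv G mul inv (star G inv a) a) eta) eta).
        { rewrite (ip_adj G mul inv e Hgrp) by auto. rewrite (lam_conv G mul inv e Hgrp) by auto. auto. }
        rewrite (ip_self_l2 G) in E by auto.
        assert (Cmod (RtoC (l2 (lam a eta) ^ 2)) <= M (conv G mul inv (star G inv a) a) eps).
        { rewrite E. eapply Rle_trans. apply ip_CS; auto. apply (lam_fin G mul inv e Hgrp); auto.
          pose proof (l2norm_ge0 G (lam (conv G mul inv (star G inv a) a) eta)).
          pose proof (l2norm_ge0 G eta).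
          assert (l2 (lam (conv G mul inv (star G inv a) a) eta) <= M (conv G mul inv (star G inv a) a) eps).
          { apply (M_ub G mul inv e Hgrp); auto. split; auto. }
          nra. }
        rewrite Cmod_R, Rabs_right in H1 by (apply Rle_ge, pow2_ge_0).
        rewrite <- (sqrt_pow2 (l2 (lam a eta))) by apply l2norm_ge0.
        apply sqrt_le_1_alt; auto. }
      pose proof (M_ge0 G mul inv e Hgrp z a eps Ha ltac:(lra)).
      pose proof (sqrt_sqrt _ Hc0). pose proof (sqrt_pos (M (conv G mul inv (star G inv a) a) eps)).
      nra. }
    pose proof (N_le_M G mul inv e Hgrp z a eps Ha He). nra.
Qed.

End CstarProps.

End P7.
Import P7.

Module P8.
Open Scope R_scope.

Section Strict.
Variables (G : Type) (mul : G -> G -> G) (inv : G -> G) (e : G).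
Hypothesis Hgrp : is_group mul inv e.
Variable z : G.
Hypothesis Hzc : forall g, mul z g = mul g z.

Notation fs := (fs G).
Notation finsupp := (finsupp G).
Notation l2 := (l2norm G).
Notation lam := (lam G mul inv).
Notation sz := (sz G mul inv z).
Notation B := (P4.B G).
Notation M := (P6.M G mul inv z).
Notation N := (P6.N G mul inv z).
Notation adm := (P6.adm G mul inv z).
Notation dvec := (P6.dvec G mul inv z).

Definition Rset (a : G -> C) : R -> Prop :=
  fun r => exists xi, in_l2 G xi /\ l2norm G xi <= 1 /\ r = l2norm G (lambda G mul inv a xi).

Lemma red_eq a : reduced_norm G mul inv a = sup (Rset a). Proof. reflexivity. Qed.

Lemma Rset_bound a : finsupp a -> bound (Rset a).
Proof.
  intros Ha. exists (B a). intros r [xi [H1 [H2 ->]]]. rewrite lam_eq.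
  destruct (lam_l2 G mul inv e Hgrp a xi Ha H1) as [_ H]. pose proof (B_ge0 G a).
  pose proof (l2norm_ge0 G xi). nra.
Qed.

Lemma red_ge a xi : finsupp a -> in_l2 G xi -> l2 xi <= 1 -> l2 (lam a xi) <= reduced_norm G mul inv a.
Proof. intros Ha H1 H2. rewrite red_eq. apply sup_ub. apply Rset_bound; auto. exists xi; auto. Qed.

Lemma N_le_red a : finsupp a -> N a <= reduced_norm G mul inv a.
Proof.
  intros Ha. eapply Rle_trans. apply (N_le_M G mul inv e Hgrp z a 1); auto; lra.
  apply (M_least G mul inv z); auto; try lra. intros eta [Hf [Hn _]]. apply red_ge; auto. apply fin_l2; auto.
Qed.

Definition delta (x : G) : G -> C := fun g => if excluded_middle_informative (g = x) then RtoC 1 else RtoC 0.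

Lemma delta_eq x : delta x x = RtoC 1.
Proof. unfold delta. destruct (excluded_middle_informative (x = x)); tauto. Qed.
Lemma delta_ne x g : g <> x -> delta x g = RtoC 0.
Proof. intros H. unfold delta. destruct (excluded_middle_informative (g = x)); tauto. Qed.

Definition a1 : G -> C := fun g => Cplus (delta e g) (delta z g).

Hypothesis Hez : z <> e.
Hypothesis Hzz : mul z z <> e.

Lemma inv_z_ne_e : inv z <> e.
Proof. intro H. apply Hez. rewrite <- (inv_inv _ _ _ _ Hgrp z), H. apply (inv_e _ _ _ _ Hgrp). Qed.
Lemma inv_z_ne_z : inv z <> z.
Proof. intro H. apply Hzz. rewrite <- H at 1. apply (m_Vl _ _ _ _ Hgrp). Qed.
Lemma zz_ne_z : mul z z <> z.
Proof. intro H. apply Hez. apply (m_cancel_l _ _ _ _ Hgrp z). rewrite H, (m_1r _ _ _ _ Hgrp). auto. Qed.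

Lemma ez_nodup : NoDup (e :: z :: nil).
Proof. constructor. intros [H|[]]; auto. constructor. intros []. constructor. Qed.

Lemma a1_cover : covers G (e :: z :: nil) a1.
Proof. intros g Hg. unfold a1 in Hg. destruct (excluded_middle_informative (g = e)) as [->|n1]. left; auto.
  destruct (excluded_middle_informative (g = z)) as [->|n2]. right; left; auto.
  exfalso. apply Hg. rewrite !delta_ne by auto. apply injective_projections; simpl; ring. Qed.

Lemma a1_fin : finsupp a1.
Proof. exists (e :: z :: nil). apply a1_cover. Qed.

Lemma lam_a1 eta : lam a1 eta = fun g => Cplus (eta g) (sz eta g).
Proof.
  apply functional_extensionality; intros g.
  rewrite (lam_list G mul inv (e :: z :: nil)); auto using ez_nodup, a1_cover.
  rewrite !lsum_cons, lsum_nil. unfold a1, P4.sz.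
  rewrite delta_eq, (delta_ne e z), (delta_ne z e), delta_eq by auto.
  rewrite (inv_e _ _ _ _ Hgrp), (m_1l _ _ _ _ Hgrp). ring.
Qed.

Lemma Kt_bound t : Kt t -> Cmod (Cplus (RtoC 1) t) <= sqrt 2.
Proof.
  intros [H1 H2]. unfold Cmod in *. apply sqrt_le_1_alt.
  assert (E : fst t ^ 2 + snd t ^ 2 = 1).
  { rewrite <- (sqrt_sqrt (fst t ^ 2 + snd t ^ 2)) by nra. rewrite H2. ring. }
  simpl. nra.
Qed.

Lemma N_a1 : N a1 <= sqrt 2.
Proof.
  apply (N_le_of G mul inv e Hgrp z). apply a1_fin. intros gam Hg. exists gam. split; auto.
  apply (M_least G mul inv z); auto using a1_fin; try lra. intros eta [Hf [Hn [t [Ht Hd]]]].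
  rewrite lam_a1.
  replace (fun g => Cplus (eta g) (sz eta g)) with
    (fun g => Cplus (Cmult (Cplus (RtoC 1) t) (eta g)) (dvec t eta g))
    by (apply functional_extensionality; intros; unfold P6.dvec; ring).
  eapply Rle_trans. apply (l2_tri G). apply fin_scal; auto. apply (dvec_fin G mul inv e Hgrp); auto.
  rewrite (l2sc G) by auto. pose proof (Kt_bound t Ht). pose proof (Cmod_ge_0 (Cplus (RtoC 1) t)).
  pose proof (l2norm_ge0 G eta). nra.
Qed.

Definition xi1 : G -> C := fun g => Cmult (RtoC (/ sqrt 2)) (a1 g).

Lemma sqrt2_pos : 0 < sqrt 2. Proof. apply sqrt_lt_R0; lra. Qed.

Lemma xi1_fin : finsupp xi1.
Proof. apply fin_scal, a1_fin. Qed.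

Lemma xi1_norm : l2 xi1 = 1.
Proof.
  unfold xi1. rewrite (l2sc G) by apply a1_fin. rewrite l2norm_eq.
  destruct (nsq_fin G (e :: z :: nil) a1 ez_nodup a1_cover) as [_ ->].
  unfold sq. rewrite !sumR_cons, sumR_nil. unfold a1.
  rewrite delta_eq, (delta_ne e z), (delta_ne z e), delta_eq by auto.
  replace (Cmod (Cplus (RtoC 1) (RtoC 0)) ^ 2 + (Cmod (Cplus (RtoC 0) (RtoC 1)) ^ 2 + 0)) with 2.
  rewrite Cmod_R, Rabs_right. field. apply Rgt_not_eq, sqrt2_pos. left; apply Rinv_0_lt_compat, sqrt2_pos.
  replace (Cplus (RtoC 1) (RtoC 0)) with (RtoC 1) by ring. replace (Cplus (RtoC 0) (RtoC 1)) with (RtoC 1) by ring.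
  rewrite Cmod_1. ring.
Qed.

Lemma red_a1 : sqrt 3 <= reduced_norm G mul inv a1.
Proof.
  eapply Rle_trans. 2: apply red_ge. 3: apply fin_l2, xi1_fin. 2: apply a1_fin. 2: rewrite xi1_norm; lra.
  rewrite lam_a1. rewrite l2norm_eq. apply sqrt_le_1_alt.
  assert (Hf : finsupp (fun g => Cplus (xi1 g) (sz xi1 g))).
  { apply fin_add. apply xi1_fin. apply (sz_fin G mul inv e Hgrp), xi1_fin. }
  eapply Rle_trans. 2: apply (sq_le_nsq G (e :: z :: mul z z :: nil)). 2: apply fin_l2; auto.
  2:{ constructor. intros [H|[H|[]]]; auto. constructor. intros [H|[]]; auto. apply zz_ne_z; auto.
      constructor. intros []. constructor. }
  unfold sq. rewrite !sumR_cons, sumR_nil. unfold xi1, P4.sz, a1.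
  rewrite (inv_z_ne_e) || idtac.
  rewrite (m_KV _ _ _ _ Hgrp).
  replace (mul (inv z) e) with (inv z) by (rewrite (m_1r _ _ _ _ Hgrp); auto).
  rewrite (m_Vl _ _ _ _ Hgrp).
  rewrite !delta_eq.
  rewrite (delta_ne e z), (delta_ne z e), (delta_ne e (inv z)), (delta_ne z (inv z)),
    (delta_ne e (mul z z)), (delta_ne z (mul z z)) by (auto using inv_z_ne_e, inv_z_ne_z, zz_ne_z).
  set (c := RtoC (/ sqrt 2)).
  assert (Hc : Cmod c = / sqrt 2).
  { unfold c. rewrite Cmod_R, Rabs_right; auto. left; apply Rinv_0_lt_compat, sqrt2_pos. }
  assert (E1 : Cplus (Cmult c (Cplus (RtoC 1) (RtoC 0))) (Cmult c (Cplus (RtoC 0) (RtoC 0))) = c) by ring.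
  assert (E2 : Cplus (Cmult c (Cplus (RtoC 0) (RtoC 1))) (Cmult c (Cplus (RtoC 1) (RtoC 0))) = Cmult (RtoC 2) c) by ring.
  assert (E3 : Cplus (Cmult c (Cplus (RtoC 0) (RtoC 0))) (Cmult c (Cplus (RtoC 0) (RtoC 1))) = c) by ring.
  rewrite E1, E2, E3, Cmod_mult, Hc, Cmod_R, Rabs_right by lra.
  assert (H2 : (/ sqrt 2) ^ 2 = / 2).
  { rewrite <- Rinv_pow. simpl. rewrite Rmult_1_r, sqrt_sqrt; lra. apply Rgt_not_eq, sqrt2_pos. }
  replace ((2 * / sqrt 2) ^ 2) with (4 * (/ sqrt 2) ^ 2) by ring. rewrite H2. lra.
Qed.

End Strict.

End P8.
Import P8.

Module P9.
Open Scope R_scope.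

Fixpoint ev (cs : list C) (x : C) : C :=
  match cs with nil => RtoC 0 | c :: cs' => Cplus c (Cmult x (ev cs' x)) end.
Fixpoint qt (cs : list C) (p : C) : list C :=
  match cs with nil => nil | c :: cs' => match cs' with nil => nil | _ => ev cs' p :: qt cs' p end end.

Lemma qt_spec cs x p : Cminus (ev cs x) (ev cs p) = Cmult (Cminus x p) (ev (qt cs p) x).
Proof.
  induction cs as [|c cs IH]. simpl; ring.
  destruct cs as [|c2 cs2]. simpl; ring.
  assert (Hq : qt (c :: c2 :: cs2) p = ev (c2::cs2) p :: qt (c2::cs2) p) by reflexivity.
  assert (Hx : forall y, ev (c :: c2 :: cs2) y = Cplus c (Cmult y (ev (c2::cs2) y))) by reflexivity.
  assert (Hy : forall y, ev (ev (c2::cs2) p :: qt (c2::cs2) p) y =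
     Cplus (ev (c2::cs2) p) (Cmult y (ev (qt (c2::cs2) p) y))) by reflexivity.
  rewrite Hq, !Hx, Hy.
  set (E := ev (c2 :: cs2) x) in *. set (Ep := ev (c2 :: cs2) p) in *.
  set (Q := ev (qt (c2 :: cs2) p) x) in *.
  assert (E = Cplus Ep (Cmult (Cminus x p) Q)). { rewrite <- IH. ring. }
  rewrite H. ring.
Qed.

Lemma qt_len cs p : length (qt cs p) = pred (length cs).
Proof. induction cs as [|c cs IH]; simpl; auto. destruct cs; simpl in *; auto. Qed.

Lemma ev_zero cs x : Forall (fun c => c = RtoC 0) cs -> ev cs x = RtoC 0.
Proof. induction 1; simpl; auto. rewrite H, IHForall. ring. Qed.

Lemma Cmult_eq0 a b : Cmult a b = RtoC 0 -> a = RtoC 0 \/ b = RtoC 0.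
Proof. intros H. destruct (excluded_middle_informative (a = RtoC 0)); auto. right.
  rewrite <- (Cinv_cancel b a) by auto. rewrite H. ring. Qed.

Definition natpts (k : nat) : list C := map (fun i => RtoC (INR (S i))) (seq 0 k).

Lemma natpts_nodup k : NoDup (natpts k).
Proof.
  unfold natpts. apply FinFun.Injective_map_NoDup. 2: apply seq_NoDup.
  intros i j H. apply RtoC_inj in H. apply INR_eq in H. lia.
Qed.
Lemma natpts_len k : length (natpts k) = k.
Proof. unfold natpts. rewrite length_map, length_seq. auto. Qed.
Lemma natpts_nz k x : In x (natpts k) -> x <> RtoC 0.
Proof. unfold natpts. intros H. apply in_map_iff in H. destruct H as [i [<- _]].
  intro E. apply RtoC_inj in E. pose proof (lt_0_INR (S i) ltac:(lia)). lra. Qed.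

Lemma poly_zero_aux n : forall cs, (length cs <= n)%nat -> forall ps, NoDup ps -> (length cs <= length ps)%nat ->
  (forall p, In p ps -> ev cs p = RtoC 0) -> Forall (fun c => c = RtoC 0) cs.
Proof.
  induction n as [|n IH]; intros cs Hl ps Nps Hlp Hev.
  - destruct cs; simpl in *; [constructor | lia].
  - destruct cs as [|c cs']. constructor.
    destruct ps as [|p ps']. simpl in Hlp; lia.
    inversion Nps; subst.
    assert (Hq : Forall (fun c => c = RtoC 0) (qt (c :: cs') p)).
    { simpl in Hl, Hlp.
      apply (IH (qt (c :: cs') p) ltac:(rewrite qt_len; simpl; lia) ps'); auto.
      rewrite qt_len; simpl; lia.
      intros x Hx. pose proof (qt_spec (c :: cs') x p) as Q.
      rewrite (Hev x (or_intror Hx)), (Hev p (or_introl eq_refl)) in Q.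
      symmetry in Q. replace (Cminus (RtoC 0) (RtoC 0)) with (RtoC 0) in Q by ring.
      apply Cmult_eq0 in Q. destruct Q as [Q|Q]; auto. exfalso.
      assert (x = p). { replace x with (Cplus (Cminus x p) p) by ring. rewrite Q. ring. }
      subst; auto. }
    assert (Hall : forall y, ev (c :: cs') y = RtoC 0).
    { intros y. pose proof (qt_spec (c :: cs') y p) as Q. rewrite (ev_zero _ _ Hq) in Q.
      rewrite (Hev p (or_introl eq_refl)) in Q.
      replace (ev (c :: cs') y) with (Cplus (Cminus (ev (c :: cs') y) (RtoC 0)) (RtoC 0)) by ring.
      rewrite Q. ring. }
    assert (Hc : c = RtoC 0). { pose proof (Hall (RtoC 0)). simpl in H. rewrite <- H. ring. }
    constructor; auto.
    simpl in Hl. apply (IH cs' ltac:(lia) (natpts (length cs'))).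
    apply natpts_nodup. rewrite natpts_len; auto.
    intros y Hy. pose proof (Hall y) as H. simpl in H. rewrite Hc in H.
    apply natpts_nz in Hy.
    assert (E : Cmult y (ev cs' y) = RtoC 0) by (rewrite <- H; ring).
    apply Cmult_eq0 in E. destruct E; auto. contradiction.
Qed.

Lemma poly_nonzero cs ps : NoDup ps -> (length cs <= length ps)%nat ->
  (exists c, In c cs /\ c <> RtoC 0) -> exists p, In p ps /\ ev cs p <> RtoC 0.
Proof.
  intros N L [c [Hc Hn]]. destruct (excluded_middle_informative (exists p, In p ps /\ ev cs p <> RtoC 0)); auto.
  exfalso. assert (Forall (fun c => c = RtoC 0) cs).
  { apply (poly_zero_aux (length cs) cs (le_n _) ps N L). intros p Hp.
    destruct (excluded_middle_informative (ev cs p = RtoC 0)); auto. exfalso; apply n; eauto. }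
  rewrite Forall_forall in H. apply Hn, H; auto.
Qed.

Definition pt (k : nat) : C := (- / (INR k + 1), sqrt (1 - (/ (INR k + 1)) ^ 2)).

Lemma pt_K k : Kt (pt k).
Proof.
  pose proof (pos_INR k). assert (H1 : 0 < / (INR k + 1)) by (apply Rinv_0_lt_compat; lra).
  assert (H2 : / (INR k + 1) <= 1).
  { rewrite <- Rinv_1. apply Rinv_le_contravar; lra. }
  split. simpl. lra.
  unfold Cmod, pt; cbn [fst snd].
  rewrite pow2_sqrt by nra.
  replace ((- / (INR k + 1)) ^ 2 + (1 - (/ (INR k + 1)) ^ 2)) with 1 by ring. apply sqrt_1.
Qed.

Lemma pt_nodup L : NoDup (map pt (seq 0 L)).
Proof.
  apply FinFun.Injective_map_NoDup. 2: apply seq_NoDup.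
  intros i j H. unfold pt in H. injection H as H1 _.
  pose proof (pos_INR i). pose proof (pos_INR j).
  assert (/ (INR i + 1) = / (INR j + 1)) by lra.
  apply Rinv_eq_reg in H2. apply INR_eq. lra.
Qed.

Lemma Kt_conj t : Kt t -> Kt (Cconj t).
Proof. intros [H1 H2]. split. simpl; auto. rewrite Cmod_conj; auto. Qed.

End P9.
Import P9.

Module P10.
Open Scope R_scope.

Section Gen.
Lemma lsum_single_gen (A : Type) (l : list A) f k : NoDup l -> In k l -> (forall i, In i l -> i <> k -> f i = RtoC 0) ->
  lsum A l f = f k.
Proof.
  induction l as [|a l IH]; intros N Hk H. destruct Hk.
  inversion N; subst. rewrite lsum_cons. destruct Hk as [->|Hk].
  - replace (lsum A l f) with (RtoC 0). ring. symmetry. transitivity (lsum A l (fun _ => RtoC 0)).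
    apply lsum_ext. intros i Hi. apply H. right; auto. intro E; subst; contradiction. apply lsum_zero.
  - rewrite H. rewrite IH; auto. ring. intros; apply H; auto; right; auto. left; auto.
    intro E; subst; contradiction.
Qed.

Lemma lsum_zero_gen (A : Type) (l : list A) f : (forall i, In i l -> f i = RtoC 0) -> lsum A l f = RtoC 0.
Proof. intros H. transitivity (lsum A l (fun _ => RtoC 0)). apply lsum_ext; auto. apply lsum_zero. Qed.

Lemma lsum_mapT (A B : Type) (phi : A -> B) l f : lsum B (map phi l) f = lsum A l (fun x => f (phi x)).
Proof. induction l; [reflexivity|]. cbn [map]. rewrite !lsum_cons, IHl; auto. Qed.
Lemma sumR_mapT (A B : Type) (phi : A -> B) l f : sumR B (map phi l) f = sumR A l (fun x => f (phi x)).
Proof. induction l; [reflexivity|]. cbn [map]. rewrite !sumR_cons, IHl; auto. Qed.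

Lemma sumR_const (A : Type) (l : list A) c : sumR A l (fun _ => c) = INR (length l) * c.
Proof. induction l; [rewrite sumR_nil; simpl; ring|]. rewrite sumR_cons, IHl. cbn [length]. rewrite S_INR. ring. Qed.

Lemma lsum_seq_S k W f : lsum nat (seq (S k) W) f = lsum nat (seq k W) (fun j => f (S j)).
Proof. rewrite <- seq_shift, lsum_mapT. auto. Qed.

Lemma lsum_seq_shift m W f : lsum nat (seq m W) f = lsum nat (seq 0 W) (fun j => f (m + j)%nat).
Proof.
  revert f. induction m; intros f. apply lsum_ext; auto.
  rewrite lsum_seq_S, IHm. apply lsum_ext. intros; f_equal.
Qed.

Lemma lsum_window n m W f : (m + W <= n)%nat -> (forall i, (i < m \/ m + W <= i)%nat -> f i = RtoC 0) ->
  lsum nat (seq 0 n) f = lsum nat (seq m W) f.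
Proof.
  intros Hn H. replace n with (m + (W + (n - m - W)))%nat by lia.
  rewrite !seq_app, !lsum_app.
  rewrite (lsum_zero_gen _ (seq 0 m)). rewrite (lsum_zero_gen _ (seq (0 + m + W) _)). simpl. ring.
  intros i Hi. apply in_seq in Hi. apply H. lia.
  intros i Hi. apply in_seq in Hi. apply H. lia.
Qed.

Lemma lsum_ev k W r s : lsum nat (seq k W) (fun j => Cmult (r j) (Cpow s j)) = Cmult (Cpow s k) (ev (map r (seq k W)) s).
Proof.
  revert k. induction W; intros k. cbn [seq map ev]. rewrite lsum_nil. ring.
  cbn [seq map ev]. rewrite lsum_cons, IHW. cbn [Cpow]. ring.
Qed.
End Gen.

Section Pow.
Variables (G : Type) (mul : G -> G -> G) (inv : G -> G) (e : G).
Hypothesis Hgrp : is_group mul inv e.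
Variable z : G.
Hypothesis Hzc : forall g, mul z g = mul g z.
Hypothesis Hinf : forall n : nat, (0 < n)%nat -> gpow mul e z n <> e.

Notation zp := (gpow mul e z).

Lemma zp_add m n : zp (m + n) = mul (zp m) (zp n).
Proof. induction m; simpl. rewrite (m_1l _ _ _ _ Hgrp); auto. rewrite IHm, (m_assoc _ _ _ _ Hgrp); auto. Qed.

Lemma zp_central n g : mul (zp n) g = mul g (zp n).
Proof.
  induction n; simpl. rewrite (m_1l _ _ _ _ Hgrp), (m_1r _ _ _ _ Hgrp); auto.
  rewrite <- (m_assoc _ _ _ _ Hgrp), IHn, (m_assoc _ _ _ _ Hgrp), Hzc, (m_assoc _ _ _ _ Hgrp). auto.
Qed.

Lemma zp_inj m n : zp m = zp n -> m = n.
Proof.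
  intros H. destruct (Nat.lt_trichotomy m n) as [L|[L|L]]; auto; exfalso.
  - replace n with (m + (n - m))%nat in H by lia. rewrite zp_add in H.
    apply (Hinf (n - m)). lia. apply (m_cancel_l _ _ _ _ Hgrp (zp m)). rewrite <- H, (m_1r _ _ _ _ Hgrp). auto.
  - replace m with (n + (m - n))%nat in H by lia. rewrite zp_add in H.
    apply (Hinf (m - n)). lia. apply (m_cancel_l _ _ _ _ Hgrp (zp n)). rewrite H, (m_1r _ _ _ _ Hgrp). auto.
Qed.

Lemma zp_diff p q p' q' : mul (zp p) (inv (zp q)) = mul (zp p') (inv (zp q')) -> (p + q' = p' + q)%nat.
Proof.
  intros H. apply zp_inj. rewrite !zp_add.
  assert (E : zp p = mul (mul (zp p') (inv (zp q'))) (zp q)).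
  { rewrite <- H, <- (m_assoc _ _ _ _ Hgrp), (m_Vl _ _ _ _ Hgrp), (m_1r _ _ _ _ Hgrp). auto. }
  rewrite E. rewrite <- !(m_assoc _ _ _ _ Hgrp). f_equal.
  rewrite (zp_central q (zp q')). rewrite (m_assoc _ _ _ _ Hgrp), (m_Vl _ _ _ _ Hgrp), (m_1l _ _ _ _ Hgrp). auto.
Qed.

Lemma Dbound_list (l : list G) : exists D, forall x, In x l -> forall p q,
  mul (zp p) (inv (zp q)) = x -> (p <= q + D /\ q <= p + D)%nat.
Proof.
  induction l as [|x l [D HD]]. exists 0%nat. intros x [].
  destruct (excluded_middle_informative (exists p0 q0, mul (zp p0) (inv (zp q0)) = x)) as [[p0 [q0 Hx]]|Hx].
  - exists (p0 + q0 + D)%nat. intros y [<-|Hy] p q Hpq.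
    + rewrite <- Hx in Hpq. apply zp_diff in Hpq. lia.
    + destruct (HD y Hy p q Hpq). lia.
  - exists D. intros y [<-|Hy] p q Hpq. exfalso; apply Hx; eauto. apply (HD y Hy p q Hpq).
Qed.

Lemma Dbound b : finsupp G b -> exists D, forall p q,
  b (mul (zp p) (inv (zp q))) <> RtoC 0 -> (p <= q + D /\ q <= p + D)%nat.
Proof.
  intros [l Hl]. destruct (Dbound_list l) as [D HD]. exists D. intros p q H.
  apply (HD _ (Hl _ H)). auto.
Qed.

Lemma zp_window m D j : mul (zp (m + D)) (inv (zp (m + j))) = mul (zp D) (inv (zp j)).
Proof.
  rewrite !zp_add, (inv_mul _ _ _ _ Hgrp). rewrite <- (m_assoc _ _ _ _ Hgrp).
  rewrite (zp_central m). rewrite <- !(m_assoc _ _ _ _ Hgrp).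
  rewrite (m_Vl _ _ _ _ Hgrp), (m_1r _ _ _ _ Hgrp). auto.
Qed.

Lemma invz_not_zp i : inv z <> zp i.
Proof.
  intro H. apply (Hinf (S i)). lia. simpl. rewrite <- H. apply (m_Vr _ _ _ _ Hgrp).
Qed.

End Pow.

End P10.
Import P10.

Module P11.
Open Scope R_scope.

Section Eta.
Variables (G : Type) (mul : G -> G -> G) (inv : G -> G) (e : G).
Hypothesis Hgrp : is_group mul inv e.
Variable z : G.
Hypothesis Hzc : forall g, mul z g = mul g z.
Hypothesis Hinf : forall n : nat, (0 < n)%nat -> gpow mul e z n <> e.

Notation zp := (gpow mul e z).
Notation finsupp := (finsupp G).
Notation l2 := (l2norm G).
Notation lam := (lam G mul inv).
Notation dvec := (P6.dvec G mul inv z).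

Variables (n : nat) (c s : C).

Definition etav : G -> C := fun g =>
  lsum nat (seq 0 n) (fun i => if excluded_middle_informative (g = zp i) then Cmult c (Cpow s i) else RtoC 0).

Lemma zp_inj' : forall m k, zp m = zp k -> m = k.
Proof. apply (zp_inj G mul inv e Hgrp z Hinf). Qed.

Lemma eta_at k : (k < n)%nat -> etav (zp k) = Cmult c (Cpow s k).
Proof.
  intros Hk. unfold etav. rewrite (lsum_single_gen _ _ _ k).
  - destruct (excluded_middle_informative (zp k = zp k)); tauto.
  - apply seq_NoDup.
  - apply in_seq; lia.
  - intros i Hi Hik. destruct (excluded_middle_informative (zp k = zp i)) as [E|E]; auto.
    apply zp_inj' in E. congruence.
Qed.

Lemma eta_out g : (forall i, (i < n)%nat -> g <> zp i) -> etav g = RtoC 0.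
Proof.
  intros H. unfold etav. apply lsum_zero_gen. intros i Hi. apply in_seq in Hi.
  destruct (excluded_middle_informative (g = zp i)) as [E|E]; auto. exfalso; apply (H i); auto; lia.
Qed.

Lemma zlist_nodup k : NoDup (map zp (seq 0 k)).
Proof. apply FinFun.Injective_map_NoDup. intros a b; apply zp_inj'. apply seq_NoDup. Qed.

Lemma eta_cover : covers G (map zp (seq 0 n)) etav.
Proof.
  intros g Hg. destruct (excluded_middle_informative (exists i, (i < n)%nat /\ g = zp i)) as [[i [Hi ->]]|H].
  - apply in_map, in_seq; lia.
  - exfalso. apply Hg, eta_out. intros i Hi E. apply H; eauto.
Qed.

Lemma eta_fin : finsupp etav.
Proof. exists (map zp (seq 0 n)). apply eta_cover. Qed.

Hypothesis Hs : Cmod s = 1.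

Lemma Cmod_spow k : Cmod (Cpow s k) = 1.
Proof. rewrite Cmod_pow, Hs. apply pow1. Qed.

Lemma eta_norm : l2 etav = sqrt (INR n * Cmod c ^ 2).
Proof.
  rewrite l2norm_eq. destruct (nsq_fin G _ etav (zlist_nodup n) eta_cover) as [_ ->].
  f_equal. unfold sq. rewrite sumR_mapT.
  rewrite (sumR_ext _ _ _ (fun _ => Cmod c ^ 2)). rewrite sumR_const, length_seq. auto.
  intros k Hk. apply in_seq in Hk. rewrite eta_at by lia. rewrite Cmod_mult, Cmod_spow. ring.
Qed.

Lemma conj_s : Cmult (Cconj s) s = RtoC 1.
Proof. rewrite Cmult_comm, <- Cmod2_conj, Hs. f_equal; ring. Qed.

Lemma dvec_norm : (1 <= n)%nat -> l2 (dvec (Cconj s) etav) = sqrt (2 * Cmod c ^ 2).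
Proof.
  intros Hn. set (t := Cconj s).
  assert (Ht : Cmod t = 1) by (unfold t; rewrite Cmod_conj; auto).
  assert (Cv : covers G (map zp (seq 0 (S n))) (dvec t etav)).
  { intros g Hg. unfold P6.dvec, P4.sz in Hg.
    destruct (excluded_middle_informative (etav g = RtoC 0)) as [E|E].
    - destruct (excluded_middle_informative (etav (mul (inv z) g) = RtoC 0)) as [E2|E2].
      + exfalso; apply Hg. rewrite E, E2. ring.
      + apply eta_cover in E2. apply in_map_iff in E2. destruct E2 as [i [Hi Hi']].
        apply in_seq in Hi'. rewrite <- (m_VK _ _ _ _ Hgrp z g), <- Hi.
        change (In (zp (S i)) (map zp (seq 0 (S n)))). apply in_map, in_seq. lia.
    - apply eta_cover in E. apply in_map_iff in E. destruct E as [i [Hi Hi']]. subst g.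
      apply in_map, in_seq. apply in_seq in Hi'. lia. }
  rewrite l2norm_eq. destruct (nsq_fin G _ _ (zlist_nodup (S n)) Cv) as [_ ->]. f_equal.
  unfold sq. rewrite sumR_mapT.
  cbn [seq]. rewrite sumR_cons. rewrite <- seq_shift, sumR_mapT.
  destruct n as [|n'] eqn:En. lia.
  rewrite seq_S, sumR_app, sumR_cons, sumR_nil.
  rewrite (sumR_ext _ _ _ (fun _ => 0)).
  2:{ intros k Hk. apply in_seq in Hk. unfold P6.dvec, P4.sz. cbn [gpow].
      rewrite (m_KV _ _ _ _ Hgrp). change (mul z (zp k)) with (zp (S k)).
      rewrite !eta_at by lia. cbn [Cpow].
      replace (Cminus (Cmult c (Cpow s k)) (Cmult t (Cmult c (Cmult s (Cpow s k))))) with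
        (Cmult (Cmult c (Cpow s k)) (Cminus (RtoC 1) (Cmult t s))) by ring.
      unfold t. rewrite conj_s. replace (Cminus (RtoC 1) (RtoC 1)) with (RtoC 0) by ring.
      rewrite Cmult_0_r, Cmod_0. ring. }
  rewrite (sumR_const nat), Rmult_0_r.
  unfold P6.dvec, P4.sz. cbn [gpow]. rewrite (m_KV _ _ _ _ Hgrp), (m_1r _ _ _ _ Hgrp).
  rewrite (eta_out (inv z)) by (intros i _; apply (invz_not_zp G mul inv e Hgrp z Hinf)).
  rewrite (eta_out (mul z (zp (0 + n')))).
  2:{ intros i Hi E. change (mul z (zp (0 + n'))) with (zp (S (0 + n'))) in E. apply zp_inj' in E. lia. }
  replace e with (zp 0) by reflexivity. rewrite !eta_at by lia. cbn [Cpow].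
  replace (Cminus (RtoC 0) (Cmult t (Cmult c (RtoC 1)))) with (Copp (Cmult t c)) by ring.
  replace (Cminus (Cmult c (Cpow s (0 + n'))) (Cmult t (RtoC 0))) with (Cmult c (Cpow s (0 + n'))) by ring.
  rewrite Cmod_opp, !Cmod_mult, Ht, Cmod_spow. ring.
Qed.

End Eta.

End P11.
Import P11.

Module P12.
Open Scope R_scope.

Section Lower.
Variables (G : Type) (mul : G -> G -> G) (inv : G -> G) (e : G).
Hypothesis Hgrp : is_group mul inv e.
Variable z : G.
Hypothesis Hzc : forall g, mul z g = mul g z.
Hypothesis Hinf : forall n : nat, (0 < n)%nat -> gpow mul e z n <> e.

Notation zp := (gpow mul e z).
Notation finsupp := (finsupp G).
Notation l2 := (l2norm G).
Notation lam := (lam G mul inv).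
Notation etav := (etav G mul e z).

Lemma lam_eta b n c s x : finsupp b ->
  lam b (etav n c s) x = lsum nat (seq 0 n) (fun i => Cmult (Cmult c (Cpow s i)) (b (mul x (inv (zp i))))).
Proof.
  intros Hb. unfold P4.lam.
  rewrite <- (fsum_bij G (fun y => mul x (inv y)) (fun h => mul (inv h) x)).
  - rewrite (fsum_spec G (map zp (seq 0 n))).
    + rewrite lsum_mapT. apply lsum_ext. intros k Hk. apply in_seq in Hk.
      rewrite (inv_mul _ _ _ _ Hgrp), (inv_inv _ _ _ _ Hgrp), <- (m_assoc _ _ _ _ Hgrp), (m_Vl _ _ _ _ Hgrp),
        (m_1r _ _ _ _ Hgrp).
      rewrite (eta_at G mul inv e Hgrp z Hinf) by lia. ring.
    + apply (zlist_nodup G mul inv e Hgrp z Hinf).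
    + intros y Hy. apply Cmult_nz in Hy. destruct Hy as [_ Hy].
      rewrite (inv_mul _ _ _ _ Hgrp), (inv_inv _ _ _ _ Hgrp), <- (m_assoc _ _ _ _ Hgrp), (m_Vl _ _ _ _ Hgrp),
        (m_1r _ _ _ _ Hgrp) in Hy.
      apply (eta_cover G mul e z n c s); auto.
  - intros y. rewrite (inv_mul _ _ _ _ Hgrp), (inv_inv _ _ _ _ Hgrp), <- (m_assoc _ _ _ _ Hgrp), (m_Vl _ _ _ _ Hgrp),
        (m_1r _ _ _ _ Hgrp). auto.
  - intros h. rewrite (inv_mul _ _ _ _ Hgrp), (inv_inv _ _ _ _ Hgrp), (m_assoc _ _ _ _ Hgrp), (m_Vr _ _ _ _ Hgrp),
        (m_1l _ _ _ _ Hgrp). auto.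
  - apply fin_mul_l; auto.
Qed.

Variables (b : G -> C) (D : nat).
Hypothesis Hb : finsupp b.
Hypothesis HD : forall p q, b (mul (zp p) (inv (zp q))) <> RtoC 0 -> (p <= q + D /\ q <= p + D)%nat.

Definition rco (j : nat) : C := b (mul (zp D) (inv (zp j))).
Definition cs : list C := map rco (seq 0 (2 * D + 1)).

Lemma lam_window n c s m : (m + (2 * D + 1) <= n)%nat ->
  lam b (etav n c s) (zp (m + D)) = Cmult (Cmult c (Cpow s m)) (ev cs s).
Proof.
  intros Hm. rewrite lam_eta by auto.
  rewrite (lsum_window n m (2 * D + 1)); auto.
  2:{ intros i Hi. destruct (excluded_middle_informative (b (mul (zp (m + D)) (inv (zp i))) = RtoC 0)) as [E|E].
      rewrite E; ring. apply HD in E. lia. }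
  rewrite lsum_seq_shift.
  rewrite (lsum_ext _ _ _ (fun j => Cmult (Cmult c (Cpow s m)) (Cmult (rco j) (Cpow s j)))).
  2:{ intros j _. unfold rco. rewrite (zp_window G mul inv e Hgrp z Hzc). rewrite Cpow_add_r. ring. }
  rewrite lsum_scal, (lsum_ev 0). cbn [Cpow]. unfold cs. ring.
Qed.

Lemma lam_lower n c s : (2 * D + 1 <= n)%nat -> Cmod s = 1 ->
  INR (n - (2 * D + 1)) * (Cmod c ^ 2 * Cmod (ev cs s) ^ 2) <= l2 (lam b (etav n c s)) ^ 2.
Proof.
  intros Hn Hs. set (K := (n - (2 * D + 1))%nat).
  assert (Hf : finsupp (lam b (etav n c s))).
  { apply (lam_fin G mul inv e Hgrp); auto. apply (eta_fin G mul e z). }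
  rewrite l2norm_eq, pow2_sqrt by (apply nsq_ge0, fin_l2; auto).
  set (l := map (fun m => zp (m + D)) (seq 0 K)).
  assert (N : NoDup l).
  { apply FinFun.Injective_map_NoDup. 2: apply seq_NoDup. intros a a' E.
    apply (zp_inj G mul inv e Hgrp z Hinf) in E. lia. }
  eapply Rle_trans. 2: apply (sq_le_nsq G l); auto; apply fin_l2; auto.
  unfold sq, l. rewrite sumR_mapT.
  rewrite (sumR_ext _ _ _ (fun _ => Cmod c ^ 2 * Cmod (ev cs s) ^ 2)).
  rewrite sumR_const, length_seq. lra.
  intros m Hm. apply in_seq in Hm. rewrite lam_window by lia.
  rewrite !Cmod_mult, (Cmod_spow s Hs). ring.
Qed.

End Lower.

End P12.
Import P12.

Module P13.
Open Scope R_scope.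

Section Def.
Variables (G : Type) (mul : G -> G -> G) (inv : G -> G) (e : G).
Hypothesis Hgrp : is_group mul inv e.
Variable z : G.
Hypothesis Hzc : forall g, mul z g = mul g z.
Hypothesis Hinf : forall n : nat, (0 < n)%nat -> gpow mul e z n <> e.

Notation zp := (gpow mul e z).
Notation finsupp := (finsupp G).
Notation l2 := (l2norm G).
Notation lam := (lam G mul inv).
Notation N := (P6.N G mul inv z).
Notation M := (P6.M G mul inv z).

Lemma N_pos b : finsupp b -> b e <> RtoC 0 -> 0 < N b.
Proof.
  intros Hb Hbe.
  destruct (Dbound G mul inv e Hgrp z Hzc Hinf b Hb) as [D HD].
  set (W := (2 * D + 1)%nat).
  set (cs0 := cs G mul inv e z b D).
  destruct (poly_nonzero cs0 (map pt (seq 0 W))) as [s [Hs1 Hs2]].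
  - apply pt_nodup.
  - unfold cs0, cs. rewrite !length_map, !length_seq. auto.
  - exists (rco G mul inv e z b D D). split.
    + unfold cs0, cs. apply in_map, in_seq. lia.
    + unfold rco. rewrite (m_Vr _ _ _ _ Hgrp). auto.
  - assert (HK : Kt s). { apply in_map_iff in Hs1. destruct Hs1 as [k [<- _]]. apply pt_K. }
    assert (Hs : Cmod s = 1) by apply HK.
    set (rho := Cmod (ev cs0 s)).
    assert (Hr : 0 < rho) by (apply Cmod_gt_0; auto).
    apply Rlt_le_trans with (rho / 2). lra.
    apply (N_ge G mul inv z); auto. intros eps He.
    destruct (INR_archimed (eps ^ 2) 2) as [n0 Hn0]. apply Rlt_gt, pow_lt; auto.
    set (n := (n0 + 2 * W)%nat).
    assert (HnW : (2 * W <= n)%nat) by (unfold n; lia).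
    assert (Hn1 : (1 <= n)%nat) by (unfold n, W in *; lia).
    assert (Hn0' : INR n0 <= INR n) by (apply le_INR; unfold n; lia).
    assert (Hnp : 0 < INR n) by (apply lt_0_INR; lia).
    set (c := RtoC (/ sqrt (INR n))).
    assert (Hc : Cmod c ^ 2 = / INR n).
    { unfold c. rewrite Cmod_R, Rabs_right. rewrite <- Rinv_pow. simpl. rewrite Rmult_1_r, sqrt_sqrt; lra.
      apply Rgt_not_eq, sqrt_lt_R0; auto. left; apply Rinv_0_lt_compat, sqrt_lt_R0; auto. }
    set (eta := etav G mul e z n c s).
    assert (Adm : P6.adm G mul inv z eps eta).
    { split. apply eta_fin. split.
      - unfold eta. rewrite (eta_norm G mul inv e Hgrp z Hinf) by auto. rewrite Hc, Rinv_r, sqrt_1; lra.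
      - exists (Cconj s). split. apply Kt_conj; auto.
        unfold eta. rewrite (dvec_norm G mul inv e Hgrp z Hinf) by auto. rewrite Hc.
        rewrite <- (sqrt_pow2 eps) by lra. apply sqrt_le_1_alt.
        apply Rmult_le_reg_r with (INR n); auto. rewrite Rmult_assoc, Rinv_l by lra. nra. }
    pose proof (M_ub G mul inv e Hgrp z b eps eta Hb Adm) as HM.
    pose proof (lam_lower G mul inv e Hgrp z Hzc Hinf b D Hb HD n c s ltac:(unfold W in *; lia) Hs) as HL.
    fold cs0 in HL. fold rho in HL. fold eta in HL. rewrite Hc in HL.
    assert (HK2 : INR n / 2 <= INR (n - W)).
    { rewrite minus_INR by lia. assert (INR (2 * W) <= INR n) by (apply le_INR; auto).
      rewrite mult_INR in H. simpl in H. lra. }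
    assert (Hlow : (rho / 2) ^ 2 <= l2 (lam b eta) ^ 2).
    { eapply Rle_trans. 2: exact HL.
      apply Rle_trans with (INR n / 2 * (/ INR n * rho ^ 2)).
      - replace (INR n / 2 * (/ INR n * rho ^ 2)) with (rho ^ 2 / 2) by (field; lra). nra.
      - apply Rmult_le_compat_r. apply Rmult_le_pos. left; apply Rinv_0_lt_compat; auto. apply pow2_ge_0.
        exact HK2. }
    pose proof (l2norm_ge0 G (lam b eta)).
    assert (rho / 2 <= l2 (lam b eta)).
    { apply Rsqr_incr_0_var. unfold Rsqr. nra. auto. }
    lra.
Qed.

Lemma delta_fin x : finsupp (delta G x).
Proof. exists (x :: nil). intros g Hg. destruct (excluded_middle_informative (g = x)) as [->|n].
  left; auto. exfalso. apply Hg. apply delta_ne; auto. Qed.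

Lemma N_definite a : finsupp a -> N a = 0 -> forall g, a g = C0.
Proof.
  intros Ha HN g0. destruct (excluded_middle_informative (a g0 = C0)) as [E|E]; auto. exfalso.
  set (b := conv G mul inv (delta G (inv g0)) a).
  assert (Hbf : finsupp b) by (apply (conv_fin G mul inv e Hgrp); auto; apply delta_fin).
  assert (Hbe : b e = a g0).
  { unfold b, P4.conv. rewrite (fsum_single G _ (inv g0)).
    - rewrite delta_eq, (inv_inv _ _ _ _ Hgrp), (m_1r _ _ _ _ Hgrp). ring.
    - intros h Hh. rewrite delta_ne by auto. ring. }
  pose proof (N_pos b Hbf ltac:(rewrite Hbe; exact E)).
  pose proof (N_submult G mul inv e Hgrp z Hzc (delta G (inv g0)) a (delta_fin _) Ha).
  fold b in H0. rewrite HN, Rmult_0_r in H0. lra.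
Qed.

End Def.


End P13.
Import P13.

Theorem proposition3 (G : Type) (mul : G -> G -> G) (inv : G -> G) (e : G)
  (Hgrp : is_group mul inv e) (Hcount : countable G)
  (Hz : exists z : G, (forall g, mul z g = mul g z) /\
                      (forall n : nat, (0 < n)%nat -> gpow mul e z n <> e)) :
  ~ Cr_unique G mul inv.
Proof.
  destruct Hz as [z [Hzc Hinf]]. unfold Cr_unique. intros Hu. apply Hu.
  assert (Hez : z <> e).
  { intro E. apply (Hinf 1%nat). lia. simpl. rewrite (m_1r _ _ _ _ Hgrp). auto. }
  assert (Hzz : mul z z <> e).
  { intro E. apply (Hinf 2%nat). lia. simpl. rewrite (m_1r _ _ _ _ Hgrp). auto. }
  exists (P6.N G mul inv z). split; [|split].
  - constructor.
    + intros a Ha. apply (N_ge0 G mul inv e Hgrp z a Ha).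
    + intros a Ha HN. apply (N_definite G mul inv e Hgrp z Hzc Hinf a Ha HN).
    + intros a b Ha Hb. apply (N_triangle G mul inv e Hgrp z a b Ha Hb).
    + intros c a Ha. apply (N_homog G mul inv e Hgrp z c a Ha).
    + intros a b Ha Hb. apply (N_submult G mul inv e Hgrp z Hzc a b Ha Hb).
    + intros a Ha. apply (N_cstar G mul inv e Hgrp z Hzc a Ha).
  - intros a Ha. apply (N_le_red G mul inv e Hgrp z a Ha).
  - exists (a1 G e z). split. apply a1_fin.
    pose proof (N_a1 G mul inv e Hgrp z Hez). pose proof (red_a1 G mul inv e Hgrp z Hez Hzz).
    assert (sqrt 2 < sqrt 3) by (apply sqrt_lt_1; lra). lra.
Qed.
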